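(* For every $n\ge1$, $L^{\mathrm S}_{\mathrm{RCC8}}(\mathbb R^n,\mathbb R^n_{\mathrm{rect}})$ is recursively enumerable.
   Context: $\mathbb R^n_{\mathrm{rect}}$ is the set of closed hyper-rectangles $\prod_{i=1}^n C_i$ with each $C_i$ a non-singleton closed interval of $\mathbb R$. The structure $\mathfrak R(\mathbb R^n,\mathbb R^n_{\mathrm{rect}})$ has domain $\mathbb R^n_{\mathrm{rect}}$ and the eight RCC8 relations w.r.t. the Euclidean interior $\mathbb I$: $\mathrm{dc}$: $s\cap t=\emptyset$; $\mathrm{ec}$: $\mathbb Is\cap\mathbb It=\emptyset\neq s\cap t$; $\mathrm{po}$: $\mathbb Is\cap\mathbb It\ne\emptyset$, $s\not\subseteq t$, $t\not\subseteq s$; $\mathrm{eq}$: $s=t$; $\mathrm{tpp}$: $s\subseteq t$, $s\not\subseteq\mathbb It$, $s\ne t$; $\mathrm{ntpp}$: $s\subseteq\mathbb It$, $s\ne t$; $\mathrm{tppi},\mathrm{ntppi}$ their inverses. $\mathcal L_{\mathrm{RCC8}}$ is the modal language over propositional variables $p_1,p_2,\dots$ with $\neg,\wedge$ and a box $[r]$ for each relation, $\mathfrak M,s\models[r]\varphi$ iff $\varphi$ holds at all $t$ with $(s,t)\in r$. $L^{\mathrm S}_{\mathrm{RCC8}}(\mathbb R^n,\mathbb R^n_{\mathrm{rect}})$ is the set of formulas true at all points of all models based on substructures (restrictions to non-empty subsets of the domain) of $\mathfrak R(\mathbb R^n,\mathbb R^n_{\mathrm{rect}})$. *)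

(* Defs.v *)
From Stdlib Require Import Reals List Arith.
Import ListNotations.
Open Scope R_scope.

Definition coord (n : nat) := {i : nat | (i < n)%nat}.
Definition point (n : nat) := coord n -> R.

Record rect (n : nat) := Rect {
  lo : coord n -> R;
  hi : coord n -> R;
  lo_lt_hi : forall i, lo i < hi i }.
Arguments lo {n}. Arguments hi {n}.

Definition region {n} (r : rect n) : point n -> Prop :=
  fun x => forall i, lo r i <= x i <= hi r i.

(** Euclidean interior (written with sup-norm balls, which generate the
    Euclidean topology on R^n). *)
Definition interior {n} (S : point n -> Prop) : point n -> Prop :=
  fun x => exists e, 0 < e /\
    forall y : point n, (forall i, Rabs (y i - x i) < e) -> S y.

Definition subset {n} (S T : point n -> Prop) := forall x, S x -> T x.
Definition seteq {n} (S T : point n -> Prop) := forall x, S x <-> T x.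
Definition meets {n} (S T : point n -> Prop) := exists x, S x /\ T x.

Inductive rcc8 := DC | EC | PO | EQ | TPP | NTPP | TPPI | NTPPI.

Definition rcc8_sets {n} (r : rcc8) (s t : point n -> Prop) : Prop :=
  match r with
  | DC => ~ meets s t
  | EC => ~ meets (interior s) (interior t) /\ meets s t
  | PO => meets (interior s) (interior t) /\ ~ subset s t /\ ~ subset t s
  | EQ => seteq s t
  | TPP => subset s t /\ ~ subset s (interior t) /\ ~ seteq s t
  | NTPP => subset s (interior t) /\ ~ seteq s t
  | TPPI => subset t s /\ ~ subset t (interior s) /\ ~ seteq t s
  | NTPPI => subset t (interior s) /\ ~ seteq t s
  end.

Definition rcc8_rel {n} (r : rcc8) (s t : rect n) : Prop :=
  rcc8_sets r (region s) (region t).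

Inductive form :=
| Var : nat -> form
| Neg : form -> form
| And : form -> form -> form
| Box : rcc8 -> form -> form.

(** Truth in a model based on the substructure of R(R^n, R^n_rect) with
    domain W, under valuation V. *)
Fixpoint sat {n} (W : rect n -> Prop) (V : nat -> rect n -> Prop)
    (s : rect n) (phi : form) : Prop :=
  match phi with
  | Var k => V k s
  | Neg a => ~ sat W V s a
  | And a b => sat W V s a /\ sat W V s b
  | Box r a => forall t, W t -> rcc8_rel r s t -> sat W V t a
  end.

(** L^S_RCC8(R^n, R^n_rect): formulas true at all points of all models
    based on substructures (non-empty subsets of the domain). *)
Definition LS_rect (n : nat) (phi : form) : Prop :=
  forall (W : rect n -> Prop), (exists s, W s) ->
  forall (V : nat -> rect n -> Prop) (s : rect n), W s -> sat W V s phi.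

Inductive prf :=
| Zero : prf
| Succ : prf
| Proj : nat -> prf
| Comp : prf -> list prf -> prf
| Prec : prf -> prf -> prf
| Mu : prf -> prf.

Inductive eval : prf -> list nat -> nat -> Prop :=
| ev_zero v : eval Zero v 0
| ev_succ v : eval Succ v (S (hd 0%nat v))
| ev_proj i v : eval (Proj i) v (nth i v 0%nat)
| ev_comp f gs v ws y : evals gs v ws -> eval f ws y -> eval (Comp f gs) v y
| ev_prec0 f g v y : eval f v y -> eval (Prec f g) (0%nat :: v) y
| ev_precS f g x v r y :
    eval (Prec f g) (x :: v) r -> eval g (x :: r :: v) y ->
    eval (Prec f g) (S x :: v) y
| ev_mu f v m : eval f (m :: v) 0%nat ->
    (forall k, (k < m)%nat -> exists z, eval f (k :: v) (S z)) ->
    eval (Mu f) v m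
with evals : list prf -> list nat -> list nat -> Prop :=
| evs_nil v : evals [] v []
| evs_cons g gs v w ws : eval g v w -> evals gs v ws -> evals (g :: gs) v (w :: ws).

Definition re_nat (A : nat -> Prop) : Prop :=
  exists c : prf, forall k, A k <-> exists y, eval c [k] y.

(** Goedel numbering of formulas (Cantor pairing), computable and injective. *)
Definition cpair (a b : nat) : nat := (((a + b) * S (a + b)) / 2 + b)%nat.

Definition rcc8_code (r : rcc8) : nat :=
  match r with DC => 0 | EC => 1 | PO => 2 | EQ => 3
  | TPP => 4 | NTPP => 5 | TPPI => 6 | NTPPI => 7 end%nat.

Fixpoint code (phi : form) : nat :=
  match phi with
  | Var k => cpair 0 k
  | Neg a => cpair 1 (code a)
  | And a b => cpair 2 (cpair (code a) (code b))
  | Box r a => cpair 3 (cpair (rcc8_code r) (code a))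
  end.

Definition re_form (L : form -> Prop) : Prop :=
  re_nat (fun k => exists phi, code phi = k /\ L phi).

(* Main.v *)
From Stdlib Require Import Reals List Arith Lia Lra Bool FunctionalExtensionality ProofIrrelevance Classical ClassicalEpsilon.
Require Import Defs.
Import ListNotations.

Open Scope nat_scope.

Fixpoint prf_ind' (P : prf -> Prop) (HZ : P Zero) (HS : P Succ) (HP : forall i, P (Proj i))
  (HC : forall f gs, P f -> Forall P gs -> P (Comp f gs))
  (HR : forall f g, P f -> P g -> P (Prec f g)) (HM : forall f, P f -> P (Mu f)) (c : prf) : P c :=
  match c with
  | Zero => HZ | Succ => HS | Proj i => HP i
  | Comp f gs => HC f gs (prf_ind' P HZ HS HP HC HR HM f)
      ((fix G (l : list prf) : Forall P l := match l with
        | [] => Forall_nil _ | g :: l' => Forall_cons _ (prf_ind' P HZ HS HP HC HR HM g) (G l') end) gs)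
  | Prec f g => HR f g (prf_ind' P HZ HS HP HC HR HM f) (prf_ind' P HZ HS HP HC HR HM g)
  | Mu f => HM f (prf_ind' P HZ HS HP HC HR HM f)
  end.

Lemma eval_det : forall c v y y', eval c v y -> eval c v y' -> y = y'.
Proof.
  intro c; pattern c; apply prf_ind'; clear c.
  - intros v y y' H H'; inversion H; inversion H'; subst; auto.
  - intros v y y' H H'; inversion H; inversion H'; subst; auto.
  - intros i v y y' H H'; inversion H; inversion H'; subst; auto.
  - intros f gs Hf Hgs v y y' H H'; inversion H; inversion H'; subst.
    assert (ws = ws0).
    { clear -Hgs H2 H8. revert ws ws0 H2 H8; induction Hgs; intros ws ws0 A B;
      inversion A; inversion B; subst; auto. f_equal; eauto. }
    subst; eauto.
  - intros f g Hf Hg v. destruct v as [|x w]; intros y y' H; [inversion H|].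
    revert y y' H; induction x; intros y y' H H'; inversion H; inversion H'; subst; eauto.
    assert (r = r0) by eauto. subst; eauto.
  - intros f Hf v y y' H H'; inversion H; inversion H'; subst.
    destruct (lt_eq_lt_dec y y') as [[Hl|]|Hl]; auto.
    + destruct (H7 y Hl) as [z Hz]. specialize (Hf _ _ _ H1 Hz). discriminate.
    + destruct (H2 y' Hl) as [z Hz]. specialize (Hf _ _ _ H6 Hz). discriminate.
Qed.

Definition ev1 c (f : nat -> nat) := forall x v, eval c (x :: v) (f x).
Definition ev2 c (f : nat -> nat -> nat) := forall x y v, eval c (x :: y :: v) (f x y).
Definition ev3 c (f : nat -> nat -> nat -> nat) := forall x y z v, eval c (x :: y :: z :: v) (f x y z).

Lemma c11 c d f g : ev1 c f -> ev1 d g -> ev1 (Comp c [d]) (fun x => f (g x)).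
Proof. intros Hc Hd x v. econstructor; [repeat econstructor; apply Hd| apply Hc]. Qed.
Lemma c21 c d1 d2 h f g : ev2 c h -> ev1 d1 f -> ev1 d2 g -> ev1 (Comp c [d1; d2]) (fun x => h (f x) (g x)).
Proof. intros Hc H1 H2 x v. econstructor; [repeat econstructor; eauto| apply Hc]. Qed.
Lemma c12 c d h f : ev1 c h -> ev2 d f -> ev2 (Comp c [d]) (fun x y => h (f x y)).
Proof. intros Hc H1 x y v. econstructor; [repeat econstructor; eauto| apply Hc]. Qed.
Lemma c22 c d1 d2 h f g : ev2 c h -> ev2 d1 f -> ev2 d2 g -> ev2 (Comp c [d1; d2]) (fun x y => h (f x y) (g x y)).
Proof. intros Hc H1 H2 x y v. econstructor; [repeat econstructor; eauto| apply Hc]. Qed.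
Lemma c23 c d1 d2 h f g : ev2 c h -> ev3 d1 f -> ev3 d2 g -> ev3 (Comp c [d1; d2]) (fun x y z => h (f x y z) (g x y z)).
Proof. intros Hc H1 H2 x y z v. econstructor; [repeat econstructor; eauto| apply Hc]. Qed.
Lemma c13 c d h f : ev1 c h -> ev3 d f -> ev3 (Comp c [d]) (fun x y z => h (f x y z)).
Proof. intros Hc H1 x y z v. econstructor; [repeat econstructor; eauto| apply Hc]. Qed.

Lemma p1_0 : ev1 (Proj 0) (fun x => x). Proof. intros x v; apply (ev_proj 0). Qed.
Lemma p2_0 : ev2 (Proj 0) (fun x y => x). Proof. intros x y v; apply (ev_proj 0). Qed.
Lemma p2_1 : ev2 (Proj 1) (fun x y => y). Proof. intros x y v; apply (ev_proj 1). Qed.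
Lemma p3_0 : ev3 (Proj 0) (fun x y z => x). Proof. intros x y z v; apply (ev_proj 0). Qed.
Lemma p3_1 : ev3 (Proj 1) (fun x y z => y). Proof. intros x y z v; apply (ev_proj 1). Qed.
Lemma p3_2 : ev3 (Proj 2) (fun x y z => z). Proof. intros x y z v; apply (ev_proj 2). Qed.
Lemma e_succ : ev1 Succ S. Proof. intros x v; apply ev_succ. Qed.
Lemma e_zero : ev1 Zero (fun _ => 0). Proof. intros x v; apply ev_zero. Qed.

Fixpoint constp (c : nat) : prf := match c with 0 => Zero | S c' => Comp Succ [constp c'] end.
Lemma e_const c : ev1 (constp c) (fun _ => c).
Proof. induction c; [apply e_zero|]. apply (c11 _ _ S (fun _ => c)); auto using e_succ. Qed.

Fixpoint prec_f (b : nat -> nat) (s : nat -> nat -> nat -> nat) n x :=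
  match n with 0 => b x | S n' => s n' (prec_f b s n' x) x end.
Lemma e_prec f g b s : ev1 f b -> ev3 g s -> ev2 (Prec f g) (prec_f b s).
Proof. intros Hf Hg n x v. induction n; simpl. constructor; apply Hf. econstructor; eauto. Qed.

Lemma e_mu f p x v m : ev2 f p -> p m x = 0 -> (forall k, k < m -> p k x <> 0) -> eval (Mu f) (x :: v) m.
Proof.
  intros Hf H0 Hk. constructor. rewrite <- H0; apply Hf.
  intros k Hlt. specialize (Hk k Hlt). destruct (p k x) eqn:E; [congruence|].
  exists n. rewrite <- E; apply Hf.
Qed.

Lemma e_add : exists c, ev2 c Nat.add.
Proof.
  eexists. assert (H := e_prec (Proj 0) (Comp Succ [Proj 1]) (fun x => x) (fun _ r _ => S r) p1_0
     (c13 _ _ S _ e_succ p3_1)).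
  intros x y v. replace (x + y) with (prec_f (fun x => x) (fun _ r _ => S r) x y). apply H.
  induction x; simpl; auto.
Qed.
Lemma e_pred : exists c, ev1 c pred.
Proof.
  exists (Comp (Prec Zero (Proj 0)) [Proj 0; Proj 0]).
  assert (H := e_prec Zero (Proj 0) (fun _ => 0) (fun n _ _ => n) e_zero p3_0).
  intros x v. eapply (c21 _ _ _ _ (fun x => x) (fun x => x)) in H; [|apply p1_0|apply p1_0].
  replace (pred x) with (prec_f (fun _ => 0) (fun n _ _ => n) x x). apply H. destruct x; auto.
Qed.
Lemma e_sub : exists c, ev2 c Nat.sub.
Proof.
  destruct e_pred as [cp Hp].
  assert (H := e_prec (Proj 0) (Comp cp [Proj 1]) (fun x => x) (fun _ r _ => pred r) p1_0 (c13 _ _ _ _ Hp p3_1)).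
  eexists. eapply (c22 _ _ _ _ (fun x y => y) (fun x y => x)) in H; [|apply p2_1|apply p2_0].
  intros x y v. replace (x - y) with (prec_f (fun x => x) (fun _ r _ => pred r) y x). apply H.
  clear. revert x; induction y; intros; simpl. lia. rewrite IHy. lia.
Qed.
Lemma e_mul : exists c, ev2 c Nat.mul.
Proof.
  destruct e_add as [ca Ha].
  assert (H := e_prec Zero (Comp ca [Proj 1; Proj 2]) (fun _ => 0) (fun _ r x => r + x) e_zero (c23 _ _ _ _ _ _ Ha p3_1 p3_2)).
  eexists. intros x y v. replace (x * y) with (prec_f (fun _ => 0) (fun _ r x => r + x) x y). apply H.
  induction x; simpl; lia.
Qed.
Lemma e_ite : exists c, ev3 c (fun b x y => match b with 0 => y | _ => x end).
Proof.
  exists (Prec (Proj 1) (Proj 2)). intros b x y v. induction b.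
  - constructor. apply (ev_proj 1).
  - econstructor. apply IHb. apply (ev_proj 2).
Qed.

Open Scope nat_scope.

Fixpoint T (s : nat) := match s with 0 => 0 | S s' => T s' + S s' end.
Lemma T2 s : 2 * T s = s * S s. Proof. induction s; simpl T; lia. Qed.
Lemma cpairT a b : cpair a b = T (a + b) + b.
Proof. unfold cpair. f_equal. rewrite <- T2. rewrite Nat.mul_comm. apply Nat.div_mul. lia. Qed.
Lemma T_mono a b : a <= b -> T a <= T b.
Proof. induction 1; simpl; lia. Qed.
Lemma T_ge s : s <= T s. Proof. induction s; simpl; lia. Qed.

Fixpoint troot (z : nat) : nat :=
  match z with 0 => 0 | S z' => if T (S (troot z')) <=? S z' then S (troot z') else troot z' end.
Lemma troot_spec z : T (troot z) <= z < T (S (troot z)).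
Proof.
  induction z; simpl; [lia|]. destruct (Nat.leb_spec (T (troot z) + S (troot z)) (S z)); simpl in *; lia.
Qed.
Lemma troot_unique z s : T s <= z < T (S s) -> troot z = s.
Proof.
  intros H. pose proof (troot_spec z). destruct (lt_eq_lt_dec (troot z) s) as [[l|]|l]; auto.
  - apply T_mono in l. simpl in *. lia.
  - apply T_mono in l. simpl in *. lia.
Qed.
Definition sndu z := z - T (troot z).
Definition fstu z := troot z - sndu z.
Lemma unpair_cpair a b : fstu (cpair a b) = a /\ sndu (cpair a b) = b.
Proof.
  rewrite cpairT. assert (troot (T (a+b) + b) = a + b) by (apply troot_unique; simpl; lia).
  unfold fstu, sndu; rewrite H; lia.
Qed.
Lemma fstu_cpair a b : fstu (cpair a b) = a. Proof. apply unpair_cpair. Qed.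
Lemma sndu_cpair a b : sndu (cpair a b) = b. Proof. apply unpair_cpair. Qed.
Lemma cpair_unpair z : cpair (fstu z) (sndu z) = z.
Proof.
  pose proof (troot_spec z). rewrite cpairT. unfold fstu, sndu in *. simpl in H.
  replace (troot z - (z - T (troot z)) + (z - T (troot z))) with (troot z) by lia. lia.
Qed.
Lemma sndu_le z : sndu z <= z. Proof. unfold sndu; lia. Qed.
Lemma fstu_le z : fstu z <= z.
Proof. rewrite <- (cpair_unpair z) at 2. rewrite cpairT. pose proof (T_ge (fstu z + sndu z)). lia. Qed.
Lemma sndu_lt z : 1 <= fstu z -> sndu z < z.
Proof. intros H. rewrite <- (cpair_unpair z) at 2. rewrite cpairT. pose proof (T_ge (fstu z + sndu z)). lia. Qed.

Definition comp1 (g : nat -> nat) := exists c, ev1 c g.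

Lemma c31 c d1 d2 d3 h f g k : ev3 c h -> ev1 d1 f -> ev1 d2 g -> ev1 d3 k ->
  ev1 (Comp c [d1; d2; d3]) (fun x => h (f x) (g x) (k x)).
Proof. intros Hc H1 H2 H3 x v. econstructor; [repeat econstructor; eauto| apply Hc]. Qed.

Lemma comp1_id : comp1 (fun x => x). Proof. eexists; apply p1_0. Qed.
Lemma comp1_const c : comp1 (fun _ => c). Proof. eexists; apply e_const. Qed.
Lemma comp1_comp f g : comp1 f -> comp1 g -> comp1 (fun x => f (g x)).
Proof. intros [c1 H1] [c2 H2]. eexists. apply c11; eauto. Qed.
Lemma comp1_bin h f g : (exists c, ev2 c h) -> comp1 f -> comp1 g -> comp1 (fun x => h (f x) (g x)).
Proof. intros [c H] [c1 H1] [c2 H2]. eexists. apply c21; eauto. Qed.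
Lemma comp1_add f g : comp1 f -> comp1 g -> comp1 (fun x => f x + g x).
Proof. apply comp1_bin, e_add. Qed.
Lemma comp1_sub f g : comp1 f -> comp1 g -> comp1 (fun x => f x - g x).
Proof. apply comp1_bin, e_sub. Qed.
Lemma comp1_mul f g : comp1 f -> comp1 g -> comp1 (fun x => f x * g x).
Proof. apply comp1_bin, e_mul. Qed.
Lemma comp1_ite b f g : comp1 b -> comp1 f -> comp1 g ->
  comp1 (fun x => match b x with 0 => g x | _ => f x end).
Proof. intros [c1 H1] [c2 H2] [c3 H3]. destruct e_ite as [c H]. eexists. apply (c31 _ _ _ _ _ _ _ _ H H1 H2 H3). Qed.
Lemma e_T : comp1 T.
Proof.
  destruct e_add as [ca Ha].
  assert (H := e_prec Zero (Comp ca [Proj 1; Comp Succ [Proj 0]]) (fun _ => 0) (fun s r _ => r + S s) e_zero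
    (c23 _ _ _ _ _ _ Ha p3_1 (c13 _ _ _ _ e_succ p3_0))).
  eexists. eapply (c21 _ _ _ _ (fun x => x) (fun x => x)) in H; [|apply p1_0|apply p1_0].
  intros x v. replace (T x) with (prec_f (fun _ => 0) (fun s r _ => r + S s) x x). apply H.
  clear. generalize x at 2. induction x; simpl; auto.
Qed.
Lemma e_cpair : exists c, ev2 c cpair.
Proof.
  destruct e_add as [ca Ha]. destruct e_T as [cT HT].
  exists (Comp ca [Comp cT [ca]; Proj 1]). intros x y v. rewrite cpairT.
  apply (c22 _ _ _ _ (fun x y => T (x + y)) (fun x y => y) Ha); [|apply p2_1].
  apply c12; auto.
Qed.
Lemma comp1_cpair f g : comp1 f -> comp1 g -> comp1 (fun x => cpair (f x) (g x)).
Proof. apply comp1_bin, e_cpair. Qed.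
Lemma comp1_troot : comp1 troot.
Proof.
  destruct e_sub as [cs Hs]. destruct e_T as [cT HT].
  set (p := fun s z => S z - T (S s)).
  assert (Hp : exists c, ev2 c p).
  { eexists. unfold p. eapply (c22 _ _ _ _ (fun s z => S z) (fun s z => T (S s)) Hs).
    eapply c12; [apply e_succ|apply p2_1]. eapply c12; eauto. eapply c12; [apply e_succ|apply p2_0]. }
  destruct Hp as [cp Hp]. exists (Mu cp). intros z v. apply (e_mu _ p); auto.
  - unfold p. pose proof (troot_spec z). cbn [T] in *. lia.
  - intros k Hk. unfold p. pose proof (troot_spec z). assert (S k <= troot z) by lia.
    apply T_mono in H0. cbn [T] in *. lia.
Qed.
Lemma comp1_sndu : comp1 sndu.
Proof. unfold sndu. apply comp1_sub. apply comp1_id. apply comp1_comp. apply e_T. apply comp1_troot. Qed.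
Lemma comp1_fstu : comp1 fstu.
Proof. unfold fstu. apply comp1_sub. apply comp1_troot. apply comp1_sndu. Qed.

Lemma comp1_iter F N I : comp1 F -> comp1 N -> comp1 I -> comp1 (fun x => Nat.iter (N x) F (I x)).
Proof.
  intros [cF HF] HN HI.
  assert (H : ev2 (Prec (Proj 0) (Comp cF [Proj 1])) (fun n x => Nat.iter n F x)).
  { intros n x v. induction n; simpl. constructor. apply (ev_proj 0).
    econstructor. apply IHn. econstructor. repeat econstructor. apply HF. }
  apply (comp1_bin (fun n x => Nat.iter n F x)); eauto.
Qed.
Lemma comp1_iter_env F N I : comp1 (fun p => F (fstu p) (sndu p)) -> comp1 N -> comp1 I ->
  comp1 (fun x => Nat.iter (N x) (F x) (I x)).
Proof.
  intros HF HN HI.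
  set (G := fun p => cpair (fstu p) (F (fstu p) (sndu p))).
  assert (E : forall x n s, Nat.iter n G (cpair x s) = cpair x (Nat.iter n (F x) s)).
  { intros x n s; induction n; simpl; auto. rewrite IHn. unfold G. rewrite fstu_cpair, sndu_cpair. auto. }
  assert (comp1 (fun x => sndu (Nat.iter (N x) G (cpair x (I x))))).
  { apply comp1_comp. apply comp1_sndu. apply comp1_iter; auto. unfold G.
    apply comp1_cpair; auto. apply comp1_fstu. apply comp1_cpair; auto. apply comp1_id. }
  destruct H as [c Hc]. exists c. intros x v. rewrite <- (sndu_cpair x (Nat.iter (N x) (F x) (I x))).
  rewrite <- E. apply Hc.
Qed.

Lemma re_from_check (A : nat -> Prop) (R : nat -> nat -> nat) :
  comp1 (fun p => R (fstu p) (sndu p)) -> (forall k, A k <-> exists d, R d k = 0) -> re_nat A.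
Proof.
  intros [c Hc] HA.
  assert (H2 : ev2 (Comp c [Comp (proj1_sig (constructive_indefinite_description _ e_cpair)) [Proj 0; Proj 1]]) R).
  { destruct (constructive_indefinite_description _ e_cpair) as [cp Hcp]; simpl.
    assert (ev2 (Comp c [Comp cp [Proj 0; Proj 1]]) (fun x y => R (fstu (cpair x y)) (sndu (cpair x y)))).
    { apply (c12 _ _ (fun p => R (fstu p) (sndu p)) cpair); auto. apply (c22 _ _ _ _ (fun x y => x) (fun x y => y)); auto using p2_0, p2_1. }
    intros x y v. specialize (H x y v). cbv beta in H. rewrite fstu_cpair, sndu_cpair in H. exact H. }
  exists (Mu (Comp c [Comp (proj1_sig (constructive_indefinite_description _ e_cpair)) [Proj 0; Proj 1]])).
  intros k. rewrite HA. split.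
  - intros [d Hd].
    assert (Hex : exists m, R m k = 0 /\ forall j, j < m -> R j k <> 0).
    { clear -Hd. induction d using (well_founded_induction lt_wf).
      destruct (classic (exists j, j < d /\ R j k = 0)) as [[j [Hj1 Hj2]]|Hn].
      - apply (H j Hj1 Hj2).
      - exists d; split; auto. intros j Hj E. apply Hn; eauto. }
    destruct Hex as [m [Hm1 Hm2]]. exists m. apply (e_mu _ R); auto.
  - intros [y Hy]. inversion Hy; subst. exists y. eapply eval_det; eauto.
Qed.

Open Scope nat_scope.

Lemma comp1_pred : comp1 pred. Proof. destruct e_pred as [c H]; exists c; auto. Qed.
Lemma comp1_comp' f g : comp1 f -> comp1 g -> comp1 (fun x => f (g x)). Proof. apply comp1_comp. Qed.

Ltac c1 := repeat match goal with
  | |- comp1 (fun x => x) => apply comp1_id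
  | |- comp1 (fun x => ?c) => apply comp1_const
  | |- comp1 (fun x => cpair (@?f x) (@?g x)) => apply (comp1_cpair f g)
  | |- comp1 (fun x => (@?f x) + (@?g x)) => apply (comp1_add f g)
  | |- comp1 (fun x => (@?f x) - (@?g x)) => apply (comp1_sub f g)
  | |- comp1 (fun x => (@?f x) * (@?g x)) => apply (comp1_mul f g)
  | |- comp1 (fun x => fstu (@?f x)) => apply (comp1_comp fstu f comp1_fstu)
  | |- comp1 (fun x => sndu (@?f x)) => apply (comp1_comp sndu f comp1_sndu)
  | |- comp1 (fun x => pred (@?f x)) => apply (comp1_comp pred f comp1_pred)
  | |- comp1 (fun x => S (@?f x)) => apply (comp1_comp S f); [exists Succ; apply e_succ|]
  | H : comp1 ?g |- comp1 (fun x => ?g (@?f x)) => apply (comp1_comp g f H)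
  end.

Class Enc (A : Type) := enc : A -> nat.
#[global] Instance enc_nat : Enc nat := fun n => n.
#[global] Instance enc_bool : Enc bool := fun b => if b then 1 else 0.
#[global] Instance enc_prod {A B} `{Enc A} `{Enc B} : Enc (A * B) := fun p => cpair (enc (fst p)) (enc (snd p)).
Fixpoint encl {A} `{Enc A} (l : list A) : nat :=
  match l with [] => 0 | a :: l' => S (cpair (enc a) (encl l')) end.
#[global] Instance enc_list {A} `{Enc A} : Enc (list A) := encl.

Definition compf {A B} `{Enc A} `{Enc B} (f : A -> B) :=
  exists g, comp1 g /\ forall a, g (enc a) = enc (f a).

Lemma compf_const {A B} `{Enc A} `{Enc B} (b : B) : compf (fun _ : A => b).
Proof. exists (fun _ => enc b); split; auto. apply comp1_const. Qed.
Lemma compf_id {A} `{Enc A} : compf (fun x : A => x).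
Proof. exists (fun x => x); split; auto. apply comp1_id. Qed.
Lemma compf_comp {A B C} `{Enc A} `{Enc B} `{Enc C} (f : A -> B) (g : B -> C) :
  compf f -> compf g -> compf (fun x => g (f x)).
Proof. intros [f' [Hf Ef]] [g' [Hg Eg]]. exists (fun x => g' (f' x)); split. c1. intros; rewrite Ef, Eg; auto. Qed.
Lemma compf_pair {A B C} `{Enc A} `{Enc B} `{Enc C} (f : A -> B) (g : A -> C) :
  compf f -> compf g -> compf (fun x => (f x, g x)).
Proof. intros [f' [Hf Ef]] [g' [Hg Eg]]. exists (fun x => cpair (f' x) (g' x)); split. c1.
  intros; rewrite Ef, Eg; auto. Qed.
Lemma compf_fst {A B C} `{Enc A} `{Enc B} `{Enc C} (f : A -> B * C) :
  compf f -> compf (fun x => fst (f x)).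
Proof. intros [f' [Hf Ef]]. exists (fun x => fstu (f' x)); split. c1.
  intros; rewrite Ef. unfold enc at 1, enc_prod. rewrite fstu_cpair; auto. Qed.
Lemma compf_snd {A B C} `{Enc A} `{Enc B} `{Enc C} (f : A -> B * C) :
  compf f -> compf (fun x => snd (f x)).
Proof. intros [f' [Hf Ef]]. exists (fun x => sndu (f' x)); split. c1.
  intros; rewrite Ef. unfold enc at 1, enc_prod. rewrite sndu_cpair; auto. Qed.

Lemma compf_nat2 {A} `{Enc A} (h : nat -> nat -> nat) (f g : A -> nat) :
  comp1 (fun p => h (fstu p) (sndu p)) -> compf f -> compf g -> compf (fun x => h (f x) (g x)).
Proof. intros Hh [f' [Hf Ef]] [g' [Hg Eg]]. exists (fun x => h (fstu (cpair (f' x) (g' x))) (sndu (cpair (f' x) (g' x)))).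
  split. apply (comp1_comp (fun p => h (fstu p) (sndu p)) (fun x => cpair (f' x) (g' x))); auto; c1. intros; rewrite fstu_cpair, sndu_cpair, Ef, Eg; auto. Qed.
Lemma compf_add {A} `{Enc A} (f g : A -> nat) : compf f -> compf g -> compf (fun x => f x + g x).
Proof. apply compf_nat2. c1. Qed.
Lemma compf_sub {A} `{Enc A} (f g : A -> nat) : compf f -> compf g -> compf (fun x => f x - g x).
Proof. apply compf_nat2. c1. Qed.
Lemma compf_mul {A} `{Enc A} (f g : A -> nat) : compf f -> compf g -> compf (fun x => f x * g x).
Proof. apply compf_nat2. c1. Qed.
Lemma compf_S {A} `{Enc A} (f : A -> nat) : compf f -> compf (fun x => S (f x)).
Proof. intros [f' [Hf Ef]]. exists (fun x => S (f' x)). split. c1. intros; rewrite Ef; auto. Qed.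
Lemma compf_fstu {A} `{Enc A} (f : A -> nat) : compf f -> compf (fun x => fstu (f x)).
Proof. intros [f' [Hf Ef]]. exists (fun x => fstu (f' x)). split. c1. intros; rewrite Ef; auto. Qed.
Lemma compf_sndu {A} `{Enc A} (f : A -> nat) : compf f -> compf (fun x => sndu (f x)).
Proof. intros [f' [Hf Ef]]. exists (fun x => sndu (f' x)). split. c1. intros; rewrite Ef; auto. Qed.

Lemma compf_if {A B} `{Enc A} `{Enc B} (c : A -> bool) (f g : A -> B) :
  compf c -> compf f -> compf g -> compf (fun x => if c x then f x else g x).
Proof.
  intros [c' [Hc Ec]] [f' [Hf Ef]] [g' [Hg Eg]].
  exists (fun x => match c' x with 0 => g' x | _ => f' x end). split.
  - apply comp1_ite; auto.
  - intros a. rewrite Ec. destruct (c a); simpl; auto.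
Qed.
Lemma compf_leb {A} `{Enc A} (f g : A -> nat) : compf f -> compf g -> compf (fun x => f x <=? g x).
Proof.
  intros Hf Hg. assert (compf (fun x => if (f x - g x) =? 0 then true else false)).
  { destruct (compf_sub f g Hf Hg) as [h [Hh Eh]].
    exists (fun x => match h x with 0 => 1 | _ => 0 end). split.
    apply comp1_ite; auto; c1. intros a; cbv beta; rewrite Eh. change (enc (f a - g a)) with (f a - g a). destruct (f a - g a); reflexivity. }
  destruct H0 as [h [Hh Eh]]. exists h; split; auto. intros a; rewrite Eh.
  destruct (Nat.leb_spec (f a) (g a)); destruct (Nat.eqb_spec (f a - g a) 0); auto; lia.
Qed.
Lemma compf_ltb {A} `{Enc A} (f g : A -> nat) : compf f -> compf g -> compf (fun x => f x <? g x).
Proof. intros Hf Hg. apply (compf_leb (fun x => S (f x))); auto using compf_S. Qed.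
Lemma compf_negb {A} `{Enc A} (f : A -> bool) : compf f -> compf (fun x => negb (f x)).
Proof. intros Hf. assert (E : (fun x => negb (f x)) = fun x => if f x then false else true).
  { apply functional_extensionality; intros; destruct (f x); auto. }
  rewrite E. apply compf_if; auto; apply compf_const. Qed.
Lemma compf_andb {A} `{Enc A} (f g : A -> bool) : compf f -> compf g -> compf (fun x => f x && g x).
Proof. intros Hf Hg. apply (compf_if f g (fun _ => false)); auto. apply compf_const. Qed.
Lemma compf_orb {A} `{Enc A} (f g : A -> bool) : compf f -> compf g -> compf (fun x => f x || g x).
Proof. intros Hf Hg. apply (compf_if f (fun _ => true) g); auto. apply compf_const. Qed.
Lemma compf_eqb {A} `{Enc A} (f g : A -> nat) : compf f -> compf g -> compf (fun x => f x =? g x).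
Proof. intros Hf Hg. assert (E : (fun x => f x =? g x) = fun x => (f x <=? g x) && (g x <=? f x)).
  { apply functional_extensionality; intros. destruct (Nat.eqb_spec (f x) (g x)), (Nat.leb_spec (f x) (g x)), (Nat.leb_spec (g x) (f x)); auto; lia. }
  rewrite E. apply compf_andb; apply compf_leb; auto. Qed.
Lemma compf_boolb {A} `{Enc A} (f g : A -> bool) : compf f -> compf g -> compf (fun x => Bool.eqb (f x) (g x)).
Proof. intros Hf Hg. assert (E : (fun x => Bool.eqb (f x) (g x)) = fun x => if f x then g x else negb (g x)).
  { apply functional_extensionality; intros; destruct (f x), (g x); auto. }
  rewrite E. apply (compf_if f g (fun x => negb (g x))); auto using compf_negb. Qed.
Lemma compf_implb {A} `{Enc A} (f g : A -> bool) : compf f -> compf g -> compf (fun x => implb (f x) (g x)).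
Proof. intros Hf Hg. assert (E : (fun x => implb (f x) (g x)) = fun x => if f x then g x else true).
  { apply functional_extensionality; intros; destruct (f x), (g x); auto. }
  rewrite E. apply (compf_if f g (fun _ => true)); auto. apply compf_const. Qed.
Lemma compf_max {A} `{Enc A} (f g : A -> nat) : compf f -> compf g -> compf (fun x => Nat.max (f x) (g x)).
Proof. intros Hf Hg. assert (E : (fun x => Nat.max (f x) (g x)) = fun x => if f x <=? g x then g x else f x).
  { apply functional_extensionality; intros. destruct (Nat.leb_spec (f x) (g x)); lia. }
  rewrite E. apply compf_if; auto. apply compf_leb; auto. Qed.

Lemma compf_iter {A B} `{Enc A} `{Enc B} (N : A -> nat) (F : A -> B -> B) (I : A -> B) :
  compf (fun p : A * B => F (fst p) (snd p)) -> compf N -> compf I ->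
  compf (fun x => Nat.iter (N x) (F x) (I x)).
Proof.
  intros [F' [HF EF]] [N' [HN EN]] [I' [HI EI]].
  exists (fun x => Nat.iter (N' x) (fun s => F' (cpair x s)) (I' x)). split.
  - apply (comp1_iter_env (fun x s => F' (cpair x s))); auto. c1.
  - intros a. rewrite EN, EI. unfold enc at 1, enc_nat. induction (N a); simpl; auto.
    rewrite IHn. apply (EF (a, Nat.iter n (F a) (I a))).
Qed.

Lemma encl_length {A} `{Enc A} (l : list A) : length l <= enc l.
Proof. induction l; simpl; auto. unfold enc, enc_list in *; simpl. rewrite cpairT. lia. Qed.
Lemma compf_nil {A B} `{Enc A} `{Enc B} : compf (fun _ : A => @nil B).
Proof. apply compf_const. Qed.
Lemma compf_cons {A B} `{Enc A} `{Enc B} (f : A -> B) (g : A -> list B) :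
  compf f -> compf g -> compf (fun x => f x :: g x).
Proof. intros [f' [Hf Ef]] [g' [Hg Eg]]. exists (fun x => S (cpair (f' x) (g' x))). split. c1.
  intros; rewrite Ef, Eg; auto. Qed.

Lemma compf_fold {E A B} `{Enc E} `{Enc A} `{Enc B} (F : E -> B -> A -> B) (L : E -> list A) (I : E -> B) :
  compf (fun t : E * (B * A) => F (fst t) (fst (snd t)) (snd (snd t))) -> compf L -> compf I ->
  compf (fun e => fold_left (F e) (L e) (I e)).
Proof.
  intros [F' [HF EF]] [L' [HL EL]] [I' [HI EI]].
  set (G := fun s => match fstu (sndu s) with 0 => s | _ =>
      cpair (fstu s) (cpair (sndu (pred (fstu (sndu s))))
        (F' (cpair (fstu s) (cpair (sndu (sndu s)) (fstu (pred (fstu (sndu s)))))))) end).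
  assert (KG : forall e l acc m, length l <= m ->
     Nat.iter m G (cpair (enc e) (cpair (enc l) (enc acc))) = cpair (enc e) (cpair 0 (enc (fold_left (F e) l acc)))).
  { intros e l. induction l; intros acc m Hm.
    - simpl. induction m; simpl; auto. rewrite IHm by (simpl; lia). unfold G. rewrite sndu_cpair, fstu_cpair. auto.
    - destruct m; simpl in Hm; [lia|]. rewrite Nat.iter_succ_r.
      replace (G (cpair (enc e) (cpair (enc (a :: l)) (enc acc)))) with
        (cpair (enc e) (cpair (enc l) (enc (F e acc a)))). apply IHl; lia.
      unfold G. rewrite !sndu_cpair, !fstu_cpair. unfold enc at 5, enc_list. simpl encl.
      simpl pred. rewrite !sndu_cpair, !fstu_cpair. f_equal. f_equal.
      pose proof (EF (e, (acc, a))) as X. simpl in X. rewrite <- X. reflexivity. }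
  exists (fun x => sndu (sndu (Nat.iter (L' x) G (cpair x (cpair (L' x) (I' x)))))). split.
  - c1. apply comp1_iter; c1; auto. unfold G. apply comp1_ite; c1; auto.
  - intros e. rewrite EL, EI. rewrite KG by apply encl_length. rewrite !sndu_cpair. auto.
Qed.

Open Scope nat_scope.

Ltac cf_user := fail.
Ltac cf_user2 := fail.
Ltac cf_step :=
  cbv beta zeta; first [assumption |
  match goal with
  | |- compf (fun x => x) => apply compf_id
  | |- compf (fun x => ?c) => apply compf_const
  | |- compf (fun x => (@?f x, @?g x)) => apply (compf_pair f g)
  | |- compf (fun x => fst (@?f x)) => apply (compf_fst f)
  | |- compf (fun x => snd (@?f x)) => apply (compf_snd f)
  | |- compf (fun x => @?f x + @?g x) => apply (compf_add f g)
  | |- compf (fun x => @?f x - @?g x) => apply (compf_sub f g)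
  | |- compf (fun x => @?f x * @?g x) => apply (compf_mul f g)
  | |- compf (fun x => S (@?f x)) => apply (compf_S f)
  | |- compf (fun x => fstu (@?f x)) => apply (compf_fstu f)
  | |- compf (fun x => sndu (@?f x)) => apply (compf_sndu f)
  | |- compf (fun x => Nat.max (@?f x) (@?g x)) => apply (compf_max f g)
  | |- compf (fun x => @?f x <=? @?g x) => apply (compf_leb f g)
  | |- compf (fun x => @?f x <? @?g x) => apply (compf_ltb f g)
  | |- compf (fun x => @?f x =? @?g x) => apply (compf_eqb f g)
  | |- compf (fun x => negb (@?f x)) => apply (compf_negb f)
  | |- compf (fun x => @?f x && @?g x) => apply (compf_andb f g)
  | |- compf (fun x => @?f x || @?g x) => apply (compf_orb f g)
  | |- compf (fun x => Bool.eqb (@?f x) (@?g x)) => apply (compf_boolb f g)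
  | |- compf (fun x => implb (@?f x) (@?g x)) => apply (compf_implb f g)
  | |- compf (fun x => if @?c x then @?f x else @?g x) => apply (compf_if c f g)
  | |- compf (fun x => @?f x :: @?g x) => apply (compf_cons f g)
  | |- compf (fun x => Nat.iter (@?N x) (@?F x) (@?I x)) => apply (compf_iter N F I)
  | |- compf (fun x => fold_left (@?F x) (@?L x) (@?I x)) => apply (compf_fold F L I)
  | |- compf ?f => lazymatch f with (fun _ => _) => fail | _ => change (compf (fun x => f x)) end
  | _ => cf_user
  end].
Ltac cf := repeat cf_step.

Lemma fold_cons_rev {A} (l : list A) acc : fold_left (fun acc a => a :: acc) l acc = rev l ++ acc.
Proof. revert acc; induction l; intros; simpl; auto. rewrite IHl, <- app_assoc; auto. Qed.
Lemma compf_rev {E A} `{Enc E} `{Enc A} (L : E -> list A) : compf L -> compf (fun e => rev (L e)).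
Proof. intros HL. assert (X : compf (fun e => fold_left (fun acc a => a :: acc) (L e) [])) by cf.
  eapply eq_ind; [exact X|]. apply functional_extensionality; intros; rewrite fold_cons_rev, app_nil_r; auto. Qed.
Lemma compf_app {E A} `{Enc E} `{Enc A} (L1 L2 : E -> list A) : compf L1 -> compf L2 -> compf (fun e => L1 e ++ L2 e).
Proof. intros H1 H2. assert (X : compf (fun e => fold_left (fun acc a => a :: acc) (rev (L1 e)) (L2 e))).
  { cf. apply compf_rev; auto. }
  eapply eq_ind; [exact X|]. apply functional_extensionality; intros; rewrite fold_cons_rev, rev_involutive; auto. Qed.
Lemma fold_map {A B} (f : A -> B) l acc : fold_left (fun acc a => f a :: acc) l acc = rev (map f l) ++ acc.
Proof. revert acc; induction l; intros; simpl; auto. rewrite IHl, <- app_assoc; auto. Qed.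
Lemma compf_map {E A B} `{Enc E} `{Enc A} `{Enc B} (F : E -> A -> B) (L : E -> list A) :
  compf (fun p : E * A => F (fst p) (snd p)) -> compf L -> compf (fun e => map (F e) (L e)).
Proof. intros HF HL.
  assert (X : compf (fun e => rev (fold_left (fun acc a => F e a :: acc) (L e) []))).
  { apply compf_rev. cf. apply (compf_comp (fun t : E * (list B * A) => (fst t, snd (snd t))) (fun p => F (fst p) (snd p))); auto. cf. }
  eapply eq_ind; [exact X|]. apply functional_extensionality; intros; rewrite fold_map, app_nil_r, rev_involutive; auto. Qed.
Lemma fold_flat {A B} (f : A -> list B) l acc : fold_left (fun acc a => acc ++ f a) l acc = acc ++ flat_map f l.
Proof. revert acc; induction l; intros; simpl; auto. rewrite app_nil_r; auto. rewrite IHl, <- app_assoc; auto. Qed.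
Lemma compf_flat_map {E A B} `{Enc E} `{Enc A} `{Enc B} (F : E -> A -> list B) (L : E -> list A) :
  compf (fun p : E * A => F (fst p) (snd p)) -> compf L -> compf (fun e => flat_map (F e) (L e)).
Proof. intros HF HL.
  assert (X : compf (fun e => fold_left (fun acc a => acc ++ F e a) (L e) [])).
  { cf. apply compf_app. cf. apply (compf_comp (fun t : E * (list B * A) => (fst t, snd (snd t))) (fun p => F (fst p) (snd p))); auto. cf. }
  eapply eq_ind; [exact X|]. apply functional_extensionality; intros; rewrite fold_flat; auto. Qed.
Lemma compf_filter {E A} `{Enc E} `{Enc A} (F : E -> A -> bool) (L : E -> list A) :
  compf (fun p : E * A => F (fst p) (snd p)) -> compf L -> compf (fun e => filter (F e) (L e)).
Proof. intros HF HL.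
  assert (X : compf (fun e => flat_map (fun a => if F e a then [a] else []) (L e))).
  { apply (compf_flat_map (fun e a => if F e a then [a] else [])); auto. cf.
    all: try (apply (compf_comp (fun t : E * A => t) (fun p => F (fst p) (snd p))); auto; cf). }
  eapply eq_ind; [exact X|]. apply functional_extensionality; intros. induction (L x); simpl; auto.
  rewrite IHl. destruct (F x a); auto. Qed.
Lemma fold_orb {A} (f : A -> bool) l b : fold_left (fun b a => b || f a) l b = b || existsb f l.
Proof. revert b; induction l; intros; simpl; auto. rewrite orb_false_r; auto. rewrite IHl, orb_assoc; auto. Qed.
Lemma fold_andb {A} (f : A -> bool) l b : fold_left (fun b a => b && f a) l b = b && forallb f l.
Proof. revert b; induction l; intros; simpl; auto. rewrite andb_true_r; auto. rewrite IHl, andb_assoc; auto. Qed.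
Lemma compf_existsb {E A} `{Enc E} `{Enc A} (F : E -> A -> bool) (L : E -> list A) :
  compf (fun p : E * A => F (fst p) (snd p)) -> compf L -> compf (fun e => existsb (F e) (L e)).
Proof. intros HF HL.
  assert (X : compf (fun e => fold_left (fun b a => b || F e a) (L e) false)).
  { cf. apply (compf_comp (fun t : E * (bool * A) => (fst t, snd (snd t))) (fun p => F (fst p) (snd p))); auto. cf. }
  eapply eq_ind; [exact X|]. apply functional_extensionality; intros; rewrite fold_orb; auto. Qed.
Lemma compf_forallb {E A} `{Enc E} `{Enc A} (F : E -> A -> bool) (L : E -> list A) :
  compf (fun p : E * A => F (fst p) (snd p)) -> compf L -> compf (fun e => forallb (F e) (L e)).
Proof. intros HF HL.
  assert (X : compf (fun e => fold_left (fun b a => b && F e a) (L e) true)).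
  { cf. apply (compf_comp (fun t : E * (bool * A) => (fst t, snd (snd t))) (fun p => F (fst p) (snd p))); auto. cf. }
  eapply eq_ind; [exact X|]. apply functional_extensionality; intros; rewrite fold_andb; auto. Qed.
Lemma fold_len {A} (l : list A) n : fold_left (fun n _ => S n) l n = n + length l.
Proof. revert n; induction l; intros; simpl; auto. rewrite IHl; lia. Qed.
Lemma compf_length {E A} `{Enc E} `{Enc A} (L : E -> list A) : compf L -> compf (fun e => length (L e)).
Proof. intros HL. assert (X : compf (fun e => fold_left (fun n (_ : A) => S n) (L e) 0)) by cf.
  eapply eq_ind; [exact X|]. apply functional_extensionality; intros; rewrite fold_len; auto. Qed.
Lemma fold_nth {A} (l : list A) i d r j :
  fst (fold_left (fun p a => (if snd p =? i then a else fst p, S (snd p))) l (r, j)) =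
  if (j <=? i) && (i <? j + length l) then nth (i - j) l d else r.
Proof. revert r j; induction l; intros r j; simpl.
  - destruct (Nat.leb_spec j i), (Nat.ltb_spec i (j + 0)); auto; lia.
  - rewrite IHl. destruct (Nat.eqb_spec j i).
    + subst. destruct (Nat.leb_spec (S i) i); [lia|]. destruct (Nat.leb_spec i i); [|lia].
      destruct (Nat.ltb_spec i (i + S (length l))); [|lia]. rewrite Nat.sub_diag. auto.
    + replace (S j + length l) with (j + S (length l)) by lia.
      destruct (Nat.leb_spec (S j) i), (Nat.leb_spec j i); try lia; simpl; auto.
      destruct (Nat.ltb_spec i (j + S (length l))); auto. replace (i - j) with (S (i - S j)) by lia. auto.
Qed.
Lemma compf_nth {E A} `{Enc E} `{Enc A} (I : E -> nat) (L : E -> list A) (D : E -> A) :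
  compf I -> compf L -> compf D -> compf (fun e => nth (I e) (L e) (D e)).
Proof. intros HI HL HD.
  assert (X : compf (fun e => fst (fold_left (fun p a => (if snd p =? I e then a else fst p, S (snd p))) (L e) (D e, 0)))).
  { cf. apply (compf_comp (fun t : E * ((A * nat) * A) => I (fst t)) (fun x => x)); cf.
    apply (compf_comp (fun t : E * ((A * nat) * A) => fst t) I); cf. }
  eapply eq_ind; [exact X|]. apply functional_extensionality; intros; rewrite (fold_nth _ _ (D x)).
  simpl. rewrite Nat.sub_0_r. destruct (Nat.ltb_spec (I x) (length (L x))); auto. rewrite nth_overflow; auto. Qed.
Lemma seq_iter a m : seq a m = rev (snd (Nat.iter m (fun p : nat * list nat => (S (fst p), fst p :: snd p)) (a, []))).
Proof.
  assert (forall m, Nat.iter m (fun p : nat * list nat => (S (fst p), fst p :: snd p)) (a, []) = (a + m, rev (seq a m))).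
  { induction m0; [simpl; f_equal; lia|]. rewrite Nat.iter_succ, IHm0; cbn [fst snd]. f_equal. lia.
    rewrite seq_S, rev_app_distr; auto. }
  rewrite H; simpl; rewrite rev_involutive; auto. Qed.
Lemma compf_seq {E} `{Enc E} (A M : E -> nat) : compf A -> compf M -> compf (fun e => seq (A e) (M e)).
Proof. intros HA HM. assert (X : compf (fun e => rev (snd (Nat.iter (M e) (fun p : nat * list nat => (S (fst p), fst p :: snd p)) (A e, []))))).
  { apply compf_rev. cf. all: try (apply (compf_comp (fun t : E * (nat * list nat) => snd t) (fun p => (S (fst p), fst p :: snd p))); cf). }
  eapply eq_ind; [exact X|]. apply functional_extensionality; intros; rewrite seq_iter; auto. Qed.

Ltac cf_user ::= first
  [ match goal with |- compf (fun x => rev (@?L x)) => apply (compf_rev L) end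
  | match goal with |- compf (fun x => @?L1 x ++ @?L2 x) => apply (compf_app L1 L2) end
  | match goal with |- compf (fun x => map (@?F x) (@?L x)) => apply (compf_map F L) end
  | match goal with |- compf (fun x => flat_map (@?F x) (@?L x)) => apply (compf_flat_map F L) end
  | match goal with |- compf (fun x => filter (@?F x) (@?L x)) => apply (compf_filter F L) end
  | match goal with |- compf (fun x => existsb (@?F x) (@?L x)) => apply (compf_existsb F L) end
  | match goal with |- compf (fun x => forallb (@?F x) (@?L x)) => apply (compf_forallb F L) end
  | match goal with |- compf (fun x => length (@?L x)) => apply (compf_length L) end
  | match goal with |- compf (fun x => nth (@?I x) (@?L x) (@?D x)) => apply (compf_nth I L D) end
  | match goal with |- compf (fun x => seq (@?A x) (@?M x)) => apply (compf_seq A M) end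
  | match goal with H : compf ?g |- compf (fun x => ?g (@?f x)) => apply (compf_comp f g); [|exact H] end
  | cf_user2 ].

Goal compf (fun p : nat * list nat => map (fun a => a + fst p) (filter (fun b => b <? fst p) (snd p))).
Proof. cf. Qed.

Open Scope nat_scope.

Definition rc := list (nat * nat).
Definition pt := (rc * list bool)%type.
Definition cfg := list pt.

Definition lo_ (s : rc) i := fst (nth i s (0,0)).
Definition hi_ (s : rc) i := snd (nth i s (0,0)).
Definition meetsb n (s t : rc) := forallb (fun i => (lo_ s i <=? hi_ t i) && (lo_ t i <=? hi_ s i)) (seq 0 n).
Definition imeetsb n (s t : rc) := forallb (fun i => (lo_ s i <? hi_ t i) && (lo_ t i <? hi_ s i)) (seq 0 n).
Definition subb n (s t : rc) := forallb (fun i => (lo_ t i <=? lo_ s i) && (hi_ s i <=? hi_ t i)) (seq 0 n).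
Definition isubb n (s t : rc) := forallb (fun i => (lo_ t i <? lo_ s i) && (hi_ s i <? hi_ t i)) (seq 0 n).
Definition eqrb n (s t : rc) := forallb (fun i => (lo_ s i =? lo_ t i) && (hi_ s i =? hi_ t i)) (seq 0 n).
Definition relb n r (s t : rc) :=
  if r =? 0 then negb (meetsb n s t)
  else if r =? 1 then negb (imeetsb n s t) && meetsb n s t
  else if r =? 2 then imeetsb n s t && negb (subb n s t) && negb (subb n t s)
  else if r =? 3 then eqrb n s t
  else if r =? 4 then subb n s t && negb (isubb n s t) && negb (eqrb n s t)
  else if r =? 5 then isubb n s t && negb (eqrb n s t)
  else if r =? 6 then subb n t s && negb (isubb n t s) && negb (eqrb n t s)
  else isubb n t s && negb (eqrb n t s).

Definition Hv (H : list bool) j := nth j H false.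
Definition tag j := fstu j.
Definition pay j := sndu j.
Definition propok k H := forallb (fun j =>
  (if tag j =? 1 then Bool.eqb (Hv H j) (negb (Hv H (pay j))) else true) &&
  (if tag j =? 2 then Bool.eqb (Hv H j) (Hv H (fstu (pay j)) && Hv H (sndu (pay j))) else true)) (seq 0 (S k)).
Definition isbox j := (tag j =? 3) && (fstu (pay j) <? 8).
Definition boxr j := fstu (pay j).
Definition boxa j := sndu (pay j).
Definition pairok n k (p q : pt) :=
  implb (eqrb n (fst p) (fst q)) (forallb (fun j => Bool.eqb (Hv (snd p) j) (Hv (snd q) j)) (seq 0 (S k))) &&
  forallb (fun j => implb (isbox j && relb n (boxr j) (fst p) (fst q) && Hv (snd p) j) (Hv (snd q) (boxa j))) (seq 0 (S k)).
Definition consistent n k (c : cfg) :=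
  forallb (fun p => propok k (snd p)) c && forallb (fun p => forallb (fun q => pairok n k p q) c) c.
Definition dpt : pt := ([], []).
Definition witnessed n (c : cfg) (p : pt) j :=
  existsb (fun q => relb n (boxr j) (fst p) (fst q) && negb (Hv (snd q) (boxa j))) c.
Definition unw n (c : cfg) i j := isbox j && negb (Hv (snd (nth i c dpt)) j) && negb (witnessed n c (nth i c dpt) j).
Definition obls n k (c : cfg) := flat_map (fun i => map (fun j => (i, j)) (filter (fun j => unw n c i j) (seq 0 (S k)))) (seq 0 (length c)).
Definition scalept (p : pt) : pt := (map (fun ab => (3 * fst ab, 3 * snd ab)) (fst p), snd p).
Definition scale (c : cfg) : cfg := map scalept c.
Definition maxc (c : cfg) := fold_left Nat.max (flat_map (fun p => flat_map (fun ab => [fst ab; snd ab]) (fst p)) c) 0.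
Definition pairsB B := flat_map (fun a => map (fun b => (a, b)) (seq (S a) (B - a))) (seq 1 B).
Definition lists_of {A} m (L : list A) := Nat.iter m (fun acc => flat_map (fun l => map (fun x => x :: l) L) acc) [[]].
Definition cands n k (c : cfg) : list pt :=
  flat_map (fun R => map (fun H => (R, H)) (lists_of (S k) [false; true])) (lists_of n (pairsB (maxc c + 2))).
Definition extc n k (c : cfg) (o : nat * nat) : list cfg :=
  map (fun np => c ++ [np]) (filter (fun np => relb n (boxr (snd o)) (fst (nth (fst o) c dpt)) (fst np)
        && negb (Hv (snd np) (boxa (snd o))) && consistent n k (c ++ [np])) (cands n k c)).
Definition ext n k (c : cfg) : list cfg :=
  if length (obls n k (scale c)) =? 0 then [scale c] else extc n k (scale c) (nth 0 (obls n k (scale c)) (0,0)).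
Definition S0 n k : list cfg := filter (consistent n k)
  (map (fun H => [(repeat (1,2) n, H)]) (filter (fun H => negb (Hv H k)) (lists_of (S k) [false;true]))).
Definition step n k (l : list cfg) := flat_map (ext n k) l.
Definition Sd n k d := Nat.iter d (step n k) (S0 n k).
Definition wfstep (l : list bool) j :=
  (tag j =? 0) || ((tag j =? 1) && nth (pay j) l false) ||
  ((tag j =? 2) && nth (fstu (pay j)) l false && nth (sndu (pay j)) l false) ||
  ((tag j =? 3) && (fstu (pay j) <? 8) && nth (sndu (pay j)) l false).
Definition wfl k := Nat.iter (S k) (fun l => l ++ [wfstep l (length l)]) [].
Definition wfb k := nth k (wfl k) false.
Definition Rchk n d k := if wfb k && (length (Sd n k d) =? 0) then 0 else 1.

Lemma cf_lo {A} `{Enc A} (f : A -> rc) g : compf f -> compf g -> compf (fun x => lo_ (f x) (g x)).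
Proof. intros; unfold lo_; cf. Qed.
Lemma cf_hi {A} `{Enc A} (f : A -> rc) g : compf f -> compf g -> compf (fun x => hi_ (f x) (g x)).
Proof. intros; unfold hi_; cf. Qed.
Ltac cf_user2 ::= first [ apply cf_lo | apply cf_hi ].
Lemma cf_meets n {A} `{Enc A} (f g : A -> rc) : compf f -> compf g -> compf (fun x => meetsb n (f x) (g x)).
Proof. intros; unfold meetsb; cf. Qed.
Lemma cf_imeets n {A} `{Enc A} (f g : A -> rc) : compf f -> compf g -> compf (fun x => imeetsb n (f x) (g x)).
Proof. intros; unfold imeetsb; cf. Qed.
Lemma cf_sub n {A} `{Enc A} (f g : A -> rc) : compf f -> compf g -> compf (fun x => subb n (f x) (g x)).
Proof. intros; unfold subb; cf. Qed.
Lemma cf_isub n {A} `{Enc A} (f g : A -> rc) : compf f -> compf g -> compf (fun x => isubb n (f x) (g x)).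
Proof. intros; unfold isubb; cf. Qed.
Lemma cf_eqr n {A} `{Enc A} (f g : A -> rc) : compf f -> compf g -> compf (fun x => eqrb n (f x) (g x)).
Proof. intros; unfold eqrb; cf. Qed.
Ltac cf_user2 ::= first [ apply cf_lo | apply cf_hi | apply cf_meets | apply cf_imeets | apply cf_sub
  | apply cf_isub | apply cf_eqr ].
Lemma cf_relb n {A} `{Enc A} r (f g : A -> rc) : compf r -> compf f -> compf g -> compf (fun x => relb n (r x) (f x) (g x)).
Proof. intros; unfold relb; cf. Qed.
Lemma cf_Hv {A} `{Enc A} f g : compf f -> compf g -> compf (fun x : A => Hv (f x) (g x)).
Proof. intros; unfold Hv; cf. Qed.
Lemma cf_tag {A} `{Enc A} f : compf f -> compf (fun x : A => tag (f x)).
Proof. intros; unfold tag; cf. Qed.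
Lemma cf_pay {A} `{Enc A} f : compf f -> compf (fun x : A => pay (f x)).
Proof. intros; unfold pay; cf. Qed.
Ltac cf_user2 ::= first [ apply cf_lo | apply cf_hi | apply cf_meets | apply cf_imeets | apply cf_sub
  | apply cf_isub | apply cf_eqr | apply cf_relb | apply cf_Hv | apply cf_tag | apply cf_pay ].
Lemma cf_propok {A} `{Enc A} f g : compf f -> compf g -> compf (fun x : A => propok (f x) (g x)).
Proof. intros; unfold propok; cf. Qed.
Lemma cf_isbox {A} `{Enc A} f : compf f -> compf (fun x : A => isbox (f x)).
Proof. intros; unfold isbox; cf. Qed.
Lemma cf_boxr {A} `{Enc A} f : compf f -> compf (fun x : A => boxr (f x)).
Proof. intros; unfold boxr; cf. Qed.
Lemma cf_boxa {A} `{Enc A} f : compf f -> compf (fun x : A => boxa (f x)).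
Proof. intros; unfold boxa; cf. Qed.
Ltac cf_user2 ::= first [ apply cf_lo | apply cf_hi | apply cf_meets | apply cf_imeets | apply cf_sub
  | apply cf_isub | apply cf_eqr | apply cf_relb | apply cf_Hv | apply cf_tag | apply cf_pay
  | apply cf_propok | apply cf_isbox | apply cf_boxr | apply cf_boxa ].
Lemma cf_pairok n {A} `{Enc A} k f g : compf k -> compf f -> compf g -> compf (fun x : A => pairok n (k x) (f x) (g x)).
Proof. intros; unfold pairok; cf. Qed.
Ltac cf_user2 ::= first [ apply cf_lo | apply cf_hi | apply cf_meets | apply cf_imeets | apply cf_sub
  | apply cf_isub | apply cf_eqr | apply cf_relb | apply cf_Hv | apply cf_tag | apply cf_pay
  | apply cf_propok | apply cf_isbox | apply cf_boxr | apply cf_boxa | apply cf_pairok ].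
Lemma cf_consistent n {A} `{Enc A} k f : compf k -> compf f -> compf (fun x : A => consistent n (k x) (f x)).
Proof. intros; unfold consistent; cf. Qed.
Lemma cf_witnessed n {A} `{Enc A} c p j : compf c -> compf p -> compf j -> compf (fun x : A => witnessed n (c x) (p x) (j x)).
Proof. intros; unfold witnessed; cf. Qed.
Ltac cf_user2 ::= first [ apply cf_lo | apply cf_hi | apply cf_meets | apply cf_imeets | apply cf_sub
  | apply cf_isub | apply cf_eqr | apply cf_relb | apply cf_Hv | apply cf_tag | apply cf_pay
  | apply cf_propok | apply cf_isbox | apply cf_boxr | apply cf_boxa | apply cf_pairok
  | apply cf_consistent | apply cf_witnessed ].
Lemma cf_unw n {A} `{Enc A} c i j : compf c -> compf i -> compf j -> compf (fun x : A => unw n (c x) (i x) (j x)).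
Proof. intros; unfold unw; cf. Qed.
Ltac cf_user2 ::= first [ apply cf_lo | apply cf_hi | apply cf_meets | apply cf_imeets | apply cf_sub
  | apply cf_isub | apply cf_eqr | apply cf_relb | apply cf_Hv | apply cf_tag | apply cf_pay
  | apply cf_propok | apply cf_isbox | apply cf_boxr | apply cf_boxa | apply cf_pairok
  | apply cf_consistent | apply cf_witnessed | apply cf_unw ].
Lemma cf_obls n {A} `{Enc A} k c : compf k -> compf c -> compf (fun x : A => obls n (k x) (c x)).
Proof. intros; unfold obls; cf. Qed.
Lemma cf_scale {A} `{Enc A} c : compf c -> compf (fun x : A => scale (c x)).
Proof. intros; unfold scale, scalept; cf. Qed.
Lemma cf_maxc {A} `{Enc A} c : compf c -> compf (fun x : A => maxc (c x)).
Proof. intros; unfold maxc; cf. Qed.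
Lemma cf_pairsB {A} `{Enc A} c : compf c -> compf (fun x : A => pairsB (c x)).
Proof. intros; unfold pairsB; cf. Qed.
Lemma cf_lists_of {A B} `{Enc A} `{Enc B} m (L : A -> list B) : compf m -> compf L -> compf (fun x : A => lists_of (m x) (L x)).
Proof. intros; unfold lists_of; cf. Qed.
Ltac cf_user2 ::= first [ apply cf_lo | apply cf_hi | apply cf_meets | apply cf_imeets | apply cf_sub
  | apply cf_isub | apply cf_eqr | apply cf_relb | apply cf_Hv | apply cf_tag | apply cf_pay
  | apply cf_propok | apply cf_isbox | apply cf_boxr | apply cf_boxa | apply cf_pairok
  | apply cf_consistent | apply cf_witnessed | apply cf_unw | apply cf_obls | apply cf_scale
  | apply cf_maxc | apply cf_pairsB | apply cf_lists_of ].
Lemma cf_cands n {A} `{Enc A} k c : compf k -> compf c -> compf (fun x : A => cands n (k x) (c x)).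
Proof. intros; unfold cands; cf. Qed.
Ltac cf_user2 ::= first [ apply cf_lo | apply cf_hi | apply cf_meets | apply cf_imeets | apply cf_sub
  | apply cf_isub | apply cf_eqr | apply cf_relb | apply cf_Hv | apply cf_tag | apply cf_pay
  | apply cf_propok | apply cf_isbox | apply cf_boxr | apply cf_boxa | apply cf_pairok
  | apply cf_consistent | apply cf_witnessed | apply cf_unw | apply cf_obls | apply cf_scale
  | apply cf_maxc | apply cf_pairsB | apply cf_lists_of | apply cf_cands ].
Lemma cf_extc n {A} `{Enc A} k c o : compf k -> compf c -> compf o -> compf (fun x : A => extc n (k x) (c x) (o x)).
Proof. intros; unfold extc; cf. Qed.
Ltac cf_user2 ::= first [ apply cf_lo | apply cf_hi | apply cf_meets | apply cf_imeets | apply cf_sub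
  | apply cf_isub | apply cf_eqr | apply cf_relb | apply cf_Hv | apply cf_tag | apply cf_pay
  | apply cf_propok | apply cf_isbox | apply cf_boxr | apply cf_boxa | apply cf_pairok
  | apply cf_consistent | apply cf_witnessed | apply cf_unw | apply cf_obls | apply cf_scale
  | apply cf_maxc | apply cf_pairsB | apply cf_lists_of | apply cf_cands | apply cf_extc ].
Lemma cf_ext n {A} `{Enc A} k c : compf k -> compf c -> compf (fun x : A => ext n (k x) (c x)).
Proof. intros; unfold ext; cf. Qed.
Ltac cf_user2 ::= first [ apply cf_lo | apply cf_hi | apply cf_meets | apply cf_imeets | apply cf_sub
  | apply cf_isub | apply cf_eqr | apply cf_relb | apply cf_Hv | apply cf_tag | apply cf_pay
  | apply cf_propok | apply cf_isbox | apply cf_boxr | apply cf_boxa | apply cf_pairok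
  | apply cf_consistent | apply cf_witnessed | apply cf_unw | apply cf_obls | apply cf_scale
  | apply cf_maxc | apply cf_pairsB | apply cf_lists_of | apply cf_cands | apply cf_extc | apply cf_ext ].
Lemma cf_Rchk n : compf (fun p : nat * nat => Rchk n (fst p) (snd p)).
Proof. unfold Rchk, Sd, step, S0, wfb, wfl, wfstep. cf. Qed.
Lemma comp1_Rchk n : comp1 (fun p => Rchk n (fstu p) (sndu p)).
Proof.
  destruct (cf_Rchk n) as [g [Hg Eg]]. eapply eq_ind. exact Hg. apply functional_extensionality; intros p.
  rewrite <- (cpair_unpair p) at 1. apply (Eg (fstu p, sndu p)).
Qed.

Open Scope nat_scope.

Lemma tag_c a b : tag (cpair a b) = a. Proof. apply fstu_cpair. Qed.
Lemma pay_c a b : pay (cpair a b) = b. Proof. apply sndu_cpair. Qed.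
Lemma pay_lt j : 1 <= tag j -> pay j < j. Proof. apply sndu_lt. Qed.
Lemma cpair_ge2 a b : b <= cpair a b. Proof. rewrite cpairT; lia. Qed.
Lemma cpair_ge1 a b : a <= cpair a b. Proof. rewrite cpairT. pose proof (T_ge (a+b)); lia. Qed.
Lemma cpair_lt2 a b : 1 <= a -> b < cpair a b. Proof. rewrite cpairT. pose proof (T_ge (a+b)); lia. Qed.

Lemma code_neg a : code a < code (Neg a). Proof. simpl. apply cpair_lt2; lia. Qed.
Lemma code_and1 a b : code a < code (And a b).
Proof. simpl. eapply Nat.le_lt_trans; [|apply cpair_lt2; lia]. apply cpair_ge1. Qed.
Lemma code_and2 a b : code b < code (And a b).
Proof. simpl. eapply Nat.le_lt_trans; [|apply cpair_lt2; lia]. apply cpair_ge2. Qed.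
Lemma code_box r a : code a < code (Box r a).
Proof. simpl. eapply Nat.le_lt_trans; [|apply cpair_lt2; lia]. apply cpair_ge2. Qed.

Definition WF j := Nat.iter j (fun l => l ++ [wfstep l (length l)]) [].
Lemma WF_len j : length (WF j) = j.
Proof. induction j; simpl; auto. rewrite length_app, IHj; simpl; lia. Qed.
Lemma WF_S j : WF (S j) = WF j ++ [wfstep (WF j) j].
Proof. unfold WF at 1; simpl. fold (WF j). rewrite WF_len. auto. Qed.
Lemma WF_stable y j : y < j -> nth y (WF j) false = nth y (WF (S y)) false.
Proof.
  induction 1. auto. rewrite WF_S, app_nth1; auto. rewrite WF_len; lia.
Qed.
Lemma WF_last j : nth j (WF (S j)) false = wfstep (WF j) j.
Proof. rewrite WF_S, app_nth2; rewrite WF_len; auto. rewrite Nat.sub_diag; auto. Qed.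

Lemma rcc8_code_lt r : rcc8_code r < 8. Proof. destruct r; simpl; lia. Qed.
Lemma rcc8_code_surj c : c < 8 -> exists r, rcc8_code r = c.
Proof. intros. destruct c as [|[|[|[|[|[|[|[|c]]]]]]]];
  [exists DC|exists EC|exists PO|exists EQ|exists TPP|exists NTPP|exists TPPI|exists NTPPI|lia]; reflexivity. Qed.

Lemma wf_spec j : nth j (WF (S j)) false = true <-> exists phi, code phi = j.
Proof.
  induction j as [j IH] using (well_founded_induction lt_wf).
  rewrite WF_last. unfold wfstep.
  assert (B : forall y, y < j -> nth y (WF j) false = true <-> exists phi, code phi = y).
  { intros y Hy. rewrite WF_stable by auto. apply IH; auto. }
  assert (Ej : j = cpair (tag j) (pay j)) by (symmetry; apply cpair_unpair).
  split.
  - intros H. repeat rewrite orb_true_iff in H. repeat rewrite andb_true_iff in H.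
    repeat rewrite Nat.eqb_eq in H. rewrite Nat.ltb_lt in H.
    destruct H as [[[H|[H1 H2]]|[[H1 H2] H3]]|[[H1 H2] H3]].
    + exists (Var (pay j)). simpl. rewrite <- H. symmetry. exact Ej.
    + apply B in H2; [|apply pay_lt; lia]. destruct H2 as [a Ha]. exists (Neg a). simpl. rewrite Ha, <- H1. symmetry. exact Ej.
    + assert (pay j < j) by (apply pay_lt; lia).
      apply B in H2; [|pose proof (fstu_le (pay j)); lia]. apply B in H3; [|pose proof (sndu_le (pay j)); lia].
      destruct H2 as [a Ha], H3 as [b Hb]. exists (And a b). simpl. rewrite Ha, Hb, cpair_unpair, <- H1. symmetry. exact Ej.
    + assert (pay j < j) by (apply pay_lt; lia).
      apply B in H3; [|pose proof (sndu_le (pay j)); lia]. destruct H3 as [a Ha].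
      destruct (rcc8_code_surj _ H2) as [r Hr]. exists (Box r a). simpl. rewrite Ha, Hr, cpair_unpair, <- H1. symmetry. exact Ej.
  - intros [phi Hphi]. clear Ej. subst j. destruct phi; simpl code in *; rewrite ?tag_c, ?pay_c; simpl.
    + auto.
    + simpl code in B. rewrite (proj2 (B (code phi) (code_neg phi))); eauto.
    + rewrite ?fstu_cpair, ?sndu_cpair. rewrite (proj2 (B (code phi1) (code_and1 phi1 phi2))); eauto.
      rewrite (proj2 (B (code phi2) (code_and2 phi1 phi2))); eauto.
    + rewrite ?fstu_cpair, ?sndu_cpair. rewrite (proj2 (B (code phi) (code_box r phi))); eauto.
      pose proof (rcc8_code_lt r). destruct (Nat.ltb_spec (rcc8_code r) 8); [|lia]. simpl. auto.
Qed.

Lemma wfb_spec k : wfb k = true <-> exists phi, code phi = k.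
Proof. unfold wfb, wfl. fold (WF (S k)). apply wf_spec. Qed.

Open Scope R_scope.

Definition upd {n} (x : point n) (i : coord n) (v : R) : point n :=
  fun j => if Nat.eq_dec (proj1_sig j) (proj1_sig i) then v else x j.

Lemma fin_min n (f : coord n -> R) : (forall i, 0 < f i) -> exists e, 0 < e /\ forall i, e <= f i.
Proof.
  intros Hf. assert (forall m, exists e, 0 < e /\ forall i : coord n, (proj1_sig i < m)%nat -> e <= f i).
  { induction m. exists 1; split; [lra|]. intros i Hi; lia.
    destruct IHm as [e [He H]]. destruct (lt_dec m n) as [Hm|Hm].
    - exists (Rmin e (f (exist _ m Hm))). split. apply Rmin_glb_lt; auto.
      intros i Hi. destruct (Nat.eq_dec (proj1_sig i) m).
      + replace i with (exist (fun i => (i < n)%nat) m Hm). apply Rmin_r.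
        destruct i; simpl in *; subst. f_equal. apply proof_irrelevance.
      + eapply Rle_trans. apply Rmin_l. apply H; lia.
    - exists e; split; auto. intros i Hi. apply H. destruct i; simpl in *; lia. }
  destruct (H n) as [e [He He']]. exists e; split; auto. intros i; apply He'. destruct i; simpl; auto.
Qed.

Lemma interior_rect {n} (t : rect n) x : interior (region t) x <-> forall i, lo t i < x i < hi t i.
Proof.
  split.
  - intros [e [He H]] i. split.
    + assert (Hy := H (upd x i (x i - e/2))). unfold upd in Hy.
      assert (region t (upd x i (x i - e/2))).
      { apply H. intros j. unfold upd. destruct (Nat.eq_dec (proj1_sig j) (proj1_sig i)).
        - replace (x i) with (x j). rewrite Rabs_left; lra. f_equal. destruct i, j; simpl in *; subst; f_equal; apply proof_irrelevance.
        - rewrite Rminus_diag, Rabs_R0; auto. }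
      destruct (H0 i) as [H1 _]. unfold upd in H1. destruct (Nat.eq_dec _ _); [lra|congruence].
    + assert (region t (upd x i (x i + e/2))).
      { apply H. intros j. unfold upd. destruct (Nat.eq_dec (proj1_sig j) (proj1_sig i)).
        - replace (x i) with (x j). rewrite Rabs_right; lra. f_equal. destruct i, j; simpl in *; subst; f_equal; apply proof_irrelevance.
        - rewrite Rminus_diag, Rabs_R0; auto. }
      destruct (H0 i) as [_ H1]. unfold upd in H1. destruct (Nat.eq_dec _ _); [lra|congruence].
  - intros H. destruct (fin_min n (fun i => Rmin (x i - lo t i) (hi t i - x i))) as [e [He Hm]].
    { intros i. apply Rmin_glb_lt; destruct (H i); lra. }
    exists e; split; auto. intros y Hy i. specialize (Hy i). specialize (Hm i). apply Rabs_def2 in Hy.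
    pose proof (Rmin_l (x i - lo t i) (hi t i - x i)). pose proof (Rmin_r (x i - lo t i) (hi t i - x i)).
    split; lra.
Qed.

Definition Ar {n} (s t : rect n) := forall i, lo s i <= hi t i /\ lo t i <= hi s i.
Definition Br {n} (s t : rect n) := forall i, lo s i < hi t i /\ lo t i < hi s i.
Definition SubR {n} (s t : rect n) := forall i, lo t i <= lo s i /\ hi s i <= hi t i.
Definition ISubR {n} (s t : rect n) := forall i, lo t i < lo s i /\ hi s i < hi t i.
Definition EqR {n} (s t : rect n) := forall i, lo s i = lo t i /\ hi s i = hi t i.

Lemma lohi {n} (s : rect n) i : lo s i < hi s i. Proof. apply lo_lt_hi. Qed.

Lemma meets_char {n} (s t : rect n) : meets (region s) (region t) <-> Ar s t.
Proof.
  split.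
  - intros [x [Hs Ht]] i. destruct (Hs i), (Ht i). lra.
  - intros H. exists (fun i => Rmax (lo s i) (lo t i)). split; intros i; destruct (H i);
    pose proof (lohi s i); pose proof (lohi t i);
    pose proof (Rmax_l (lo s i) (lo t i)); pose proof (Rmax_r (lo s i) (lo t i)); split; auto;
    apply Rmax_lub; lra.
Qed.
Lemma imeets_char {n} (s t : rect n) : meets (interior (region s)) (interior (region t)) <-> Br s t.
Proof.
  split.
  - intros [x [Hs Ht]] i. rewrite interior_rect in Hs, Ht. destruct (Hs i), (Ht i). lra.
  - intros H. exists (fun i => (Rmax (lo s i) (lo t i) + Rmin (hi s i) (hi t i)) / 2).
    assert (forall i, Rmax (lo s i) (lo t i) < Rmin (hi s i) (hi t i)).
    { intros i. destruct (H i). pose proof (lohi s i); pose proof (lohi t i).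
      apply Rmax_lub_lt; apply Rmin_glb_lt; lra. }
    split; rewrite interior_rect; intros i; specialize (H0 i);
    pose proof (Rmax_l (lo s i) (lo t i)); pose proof (Rmax_r (lo s i) (lo t i));
    pose proof (Rmin_l (hi s i) (hi t i)); pose proof (Rmin_r (hi s i) (hi t i)); split; lra.
Qed.
Lemma sub_char {n} (s t : rect n) : subset (region s) (region t) <-> SubR s t.
Proof.
  split.
  - intros H i. split.
    + assert (region t (lo s)). { apply H. intros j. pose proof (lohi s j); lra. } destruct (H0 i); auto.
    + assert (region t (hi s)). { apply H. intros j. pose proof (lohi s j); lra. } destruct (H0 i); auto.
  - intros H x Hx i. destruct (H i), (Hx i); lra.
Qed.
Lemma isub_char {n} (s t : rect n) : subset (region s) (interior (region t)) <-> ISubR s t.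
Proof.
  split.
  - intros H i. split.
    + assert (interior (region t) (lo s)). { apply H. intros j. pose proof (lohi s j); lra. }
      rewrite interior_rect in H0. destruct (H0 i); auto.
    + assert (interior (region t) (hi s)). { apply H. intros j. pose proof (lohi s j); lra. }
      rewrite interior_rect in H0. destruct (H0 i); auto.
  - intros H x Hx. rewrite interior_rect. intros i. destruct (H i), (Hx i); lra.
Qed.
Lemma eq_char {n} (s t : rect n) : seteq (region s) (region t) <-> EqR s t.
Proof.
  split.
  - intros H. assert (SubR s t) by (apply sub_char; intros x; apply H).
    assert (SubR t s) by (apply sub_char; intros x; apply H).
    intros i. destruct (H0 i), (H1 i). split; lra.
  - intros H x. split; intros Hx i; destruct (H i), (Hx i); lra.
Qed.

Definition relR {n} (r : rcc8) (s t : rect n) : Prop :=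
  match r with
  | DC => ~ Ar s t
  | EC => ~ Br s t /\ Ar s t
  | PO => Br s t /\ ~ SubR s t /\ ~ SubR t s
  | EQ => EqR s t
  | TPP => SubR s t /\ ~ ISubR s t /\ ~ EqR s t
  | NTPP => ISubR s t /\ ~ EqR s t
  | TPPI => SubR t s /\ ~ ISubR t s /\ ~ EqR t s
  | NTPPI => ISubR t s /\ ~ EqR t s
  end.
Lemma rel_char {n} r (s t : rect n) : rcc8_rel r s t <-> relR r s t.
Proof.
  unfold rcc8_rel, rcc8_sets, relR. destruct r;
  rewrite ?meets_char, ?imeets_char, ?sub_char, ?isub_char, ?eq_char, ?(sub_char t s), ?(isub_char t s), ?(eq_char t s);
  tauto.
Qed.

Definition nv (S : rc) m (e : bool) : nat := if e then hi_ S m else lo_ S m.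
Definition rv {n} (s : rect n) i (e : bool) : R := if e then hi s i else lo s i.
Definition Agree {n} (S T : rc) (s t : rect n) := forall (i : coord n) e e',
  ((nv S (proj1_sig i) e < nv T (proj1_sig i) e')%nat <-> rv s i e < rv t i e') /\
  ((nv T (proj1_sig i) e' < nv S (proj1_sig i) e)%nat <-> rv t i e' < rv s i e) /\
  (nv S (proj1_sig i) e = nv T (proj1_sig i) e' <-> rv s i e = rv t i e').
Lemma Agree_sym {n} S T (s t : rect n) : Agree S T s t -> Agree T S t s.
Proof. intros H i e e'. destruct (H i e' e) as [A [B C]]. split; [|split]; auto. split; intros; symmetry; apply C; auto. Qed.
Lemma Agree_le {n} S T (s t : rect n) i e e' : Agree S T s t ->
  ((nv S (proj1_sig i) e <= nv T (proj1_sig i) e')%nat <-> rv s i e <= rv t i e').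
Proof. intros H. destruct (H i e e') as [A [B C]]. split; intros.
  - destruct (Nat.eq_dec (nv S (proj1_sig i) e) (nv T (proj1_sig i) e')). apply C in e0; lra.
    assert (nv S (proj1_sig i) e < nv T (proj1_sig i) e')%nat by lia. apply A in H1; lra.
  - destruct (Req_dec (rv s i e) (rv t i e')). apply C in H1; lia. assert (rv s i e < rv t i e') by lra. apply A in H2; lia.
Qed.
Lemma Agree_le' {n} S T (s t : rect n) i e e' : Agree S T s t ->
  ((nv T (proj1_sig i) e' <= nv S (proj1_sig i) e)%nat <-> rv t i e' <= rv s i e).
Proof. intros H. apply Agree_le. apply Agree_sym; auto. Qed.
Lemma Agree_lt' {n} S T (s t : rect n) i e e' : Agree S T s t ->
  ((nv T (proj1_sig i) e' < nv S (proj1_sig i) e)%nat <-> rv t i e' < rv s i e).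
Proof. intros H. apply H. Qed.

Lemma forall_seq n (P : nat -> bool) : forallb P (seq 0 n) = true <-> forall i : coord n, P (proj1_sig i) = true.
Proof.
  rewrite forallb_forall. split.
  - intros H [i Hi]; simpl. apply H. apply in_seq; lia.
  - intros H i Hi. apply in_seq in Hi. apply (H (exist _ i (proj2 Hi))).
Qed.

Lemma tr_meets {n} S T (s t : rect n) : Agree S T s t -> meetsb n S T = true <-> Ar s t.
Proof. intros H. unfold meetsb, Ar. rewrite forall_seq. split; intros H1 i; specialize (H1 i);
  rewrite andb_true_iff, !Nat.leb_le in *.
  - pose proof (Agree_le S T s t i false true H). pose proof (Agree_le' S T s t i true false H). simpl in *. tauto.
  - pose proof (Agree_le S T s t i false true H). pose proof (Agree_le' S T s t i true false H). simpl in *. tauto.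
Qed.
Lemma tr_imeets {n} S T (s t : rect n) : Agree S T s t -> imeetsb n S T = true <-> Br s t.
Proof. intros H. unfold imeetsb, Br. rewrite forall_seq. split; intros H1 i; specialize (H1 i);
  rewrite andb_true_iff, !Nat.ltb_lt in *.
  - destruct (H i false true) as [A _]. destruct (H i true false) as [_ [B _]]. simpl in *. tauto.
  - destruct (H i false true) as [A _]. destruct (H i true false) as [_ [B _]]. simpl in *. tauto.
Qed.
Lemma tr_sub {n} S T (s t : rect n) : Agree S T s t -> subb n S T = true <-> SubR s t.
Proof. intros H. unfold subb, SubR. rewrite forall_seq. split; intros H1 i; specialize (H1 i);
  rewrite andb_true_iff, !Nat.leb_le in *.
  - pose proof (Agree_le S T s t i true true H). pose proof (Agree_le' S T s t i false false H). simpl in *. tauto.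
  - pose proof (Agree_le S T s t i true true H). pose proof (Agree_le' S T s t i false false H). simpl in *. tauto.
Qed.
Lemma tr_isub {n} S T (s t : rect n) : Agree S T s t -> isubb n S T = true <-> ISubR s t.
Proof. intros H. unfold isubb, ISubR. rewrite forall_seq. split; intros H1 i; specialize (H1 i);
  rewrite andb_true_iff, !Nat.ltb_lt in *.
  - destruct (H i true true) as [A _]. destruct (H i false false) as [_ [B _]]. simpl in *. tauto.
  - destruct (H i true true) as [A _]. destruct (H i false false) as [_ [B _]]. simpl in *. tauto.
Qed.
Lemma tr_eq {n} S T (s t : rect n) : Agree S T s t -> eqrb n S T = true <-> EqR s t.
Proof. intros H. unfold eqrb, EqR. rewrite forall_seq. split; intros H1 i; specialize (H1 i);
  rewrite andb_true_iff, !Nat.eqb_eq in *.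
  - destruct (H i false false) as [_ [_ A]]. destruct (H i true true) as [_ [_ B]]. simpl in *. tauto.
  - destruct (H i false false) as [_ [_ A]]. destruct (H i true true) as [_ [_ B]]. simpl in *. tauto.
Qed.

Lemma transfer {n} r S T (s t : rect n) : Agree S T s t ->
  relb n (rcc8_code r) S T = true <-> rcc8_rel r s t.
Proof.
  intros H. pose proof (Agree_sym _ _ _ _ H) as H'.
  rewrite rel_char. unfold relb, relR. destruct r; simpl;
  rewrite ?andb_true_iff, ?negb_true_iff, <- ?not_true_iff_false;
  rewrite ?(tr_meets _ _ _ _ H), ?(tr_imeets _ _ _ _ H), ?(tr_sub _ _ _ _ H), ?(tr_sub _ _ _ _ H'),
    ?(tr_isub _ _ _ _ H), ?(tr_isub _ _ _ _ H'), ?(tr_eq _ _ _ _ H), ?(tr_eq _ _ _ _ H'); tauto.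
Qed.

Open Scope R_scope.

Lemma list_max_cases l : list_max l = 0%nat \/ In (list_max l) l.
Proof. induction l; simpl; auto. destruct (Nat.max_spec a (list_max l)) as [[_ E]|[_ E]]; rewrite E; auto.
  destruct IHl; auto. Qed.
Lemma list_max_ge l x : In x l -> (x <= list_max l)%nat.
Proof. intros H. pose proof (proj1 (list_max_le l (list_max l)) (Nat.le_refl _)). rewrite Forall_forall in H0; auto. Qed.

Definition cmp (x u : nat) (a r : R) := ((x < u)%nat <-> a < r) /\ ((u < x)%nat <-> r < a) /\ (x = u <-> a = r).

Definition below (I : list (nat * R)) (a : R) :=
  list_max (map fst (filter (fun p => if Rlt_dec (snd p) a then true else false) I)).

Lemma below_ge I a p : In p I -> snd p < a -> (fst p <= below I a)%nat.
Proof. intros H1 H2. apply list_max_ge. apply in_map. apply filter_In. split; auto. destruct (Rlt_dec _ _); auto. Qed.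
Lemma below_cases I a : below I a = 0%nat \/ exists p, In p I /\ snd p < a /\ fst p = below I a.
Proof. unfold below. destruct (list_max_cases (map fst (filter (fun p => if Rlt_dec (snd p) a then true else false) I))) as [H|H]; auto.
  right. apply in_map_iff in H. destruct H as [p [E H]]. apply filter_In in H. destruct H.
  exists p. destruct (Rlt_dec _ _); try discriminate. auto. Qed.

Lemma gap (I : list (nat * R)) (a b : R) (M : nat) : a < b ->
  (forall p q, In p I -> In q I -> ((fst p < fst q)%nat <-> snd p < snd q) /\ (fst p = fst q <-> snd p = snd q)) ->
  (forall p, In p I -> (3 <= fst p)%nat /\ (exists z, fst p = 3 * z)%nat /\ (fst p <= M)%nat) ->
  exists x y, (1 <= x)%nat /\ (x < y)%nat /\ (y <= M + 2)%nat /\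
    forall p, In p I -> cmp x (fst p) a (snd p) /\ cmp y (fst p) b (snd p).
Proof.
  intros Hab Hiso Hm.
  assert (Lfacts : forall c, (below I c <= M)%nat /\ (exists z, below I c = 3 * z)%nat /\
     forall p, In p I -> c < snd p -> (below I c + 3 <= fst p)%nat).
  { intros c. destruct (below_cases I c) as [E|[q [Hq1 [Hq2 Hq3]]]].
    - rewrite E. split; [lia|]. split; [exists 0%nat; lia|]. intros p Hp _. destruct (Hm p Hp); lia.
    - rewrite <- Hq3. destruct (Hm q Hq1) as [A [B C]]. split; auto. split; auto.
      intros p Hp Hc. destruct (Hiso q p Hq1 Hp) as [D _]. assert (fst q < fst p)%nat by (apply D; lra).
      destruct (Hm p Hp) as [_ [[z1 E1] _]]. destruct B as [z2 E2]. lia. }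
  assert (Unm : forall c x, (forall p, In p I -> snd p <> c) -> (below I c < x)%nat -> (x <= below I c + 2)%nat ->
      forall p, In p I -> cmp x (fst p) c (snd p)).
  { intros c x Hu H1 H2 p Hp. destruct (Lfacts c) as [_ [_ L3]]. specialize (Hu p Hp).
    destruct (Rtotal_order (snd p) c) as [H|[H|H]]; [|congruence|].
    - pose proof (below_ge I c p Hp H). unfold cmp; repeat split; intros; try lia; try lra.
    - specialize (L3 p Hp H). unfold cmp; repeat split; intros; try lia; try lra. }
  assert (Mat : forall p0 c, In p0 I -> snd p0 = c -> forall p, In p I -> cmp (fst p0) (fst p) c (snd p)).
  { intros p0 c H0 E p Hp. subst c. destruct (Hiso p0 p H0 Hp) as [A B]. destruct (Hiso p p0 Hp H0) as [C _].
    unfold cmp; repeat split; intros; try apply A; try apply C; try apply B; auto. }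
  destruct (classic (exists p, In p I /\ snd p = a)) as [[pa [Ha1 Ha2]]|Hna];
  destruct (classic (exists p, In p I /\ snd p = b)) as [[pb [Hb1 Hb2]]|Hnb].
  - exists (fst pa), (fst pb). destruct (Hm pa Ha1) as [? [? ?]]. destruct (Hm pb Hb1) as [? [? ?]].
    destruct (Hiso pa pb Ha1 Hb1) as [A _]. assert (fst pa < fst pb)%nat by (apply A; lra).
    split; [lia|split; [lia|split; [lia|]]]. intros p1 Hp1; split; apply Mat; auto.
  - assert (Hu : forall p, In p I -> snd p <> b) by (intros p Hp E; apply Hnb; eauto).
    exists (fst pa), (below I b + 2)%nat. destruct (Hm pa Ha1) as [? [? ?]].
    pose proof (below_ge I b pa Ha1 ltac:(lra)). destruct (Lfacts b) as [L1 _].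
    split; [lia|split; [lia|split; [lia|]]]. intros p1 Hp1; split. apply Mat; auto. apply Unm; auto; lia.
  - assert (Hu : forall p, In p I -> snd p <> a) by (intros p Hp E; apply Hna; eauto).
    exists (below I a + 1)%nat, (fst pb). destruct (Hm pb Hb1) as [? [? ?]].
    destruct (Lfacts a) as [L1 [_ L3]]. pose proof (L3 pb Hb1 ltac:(lra)).
    split; [lia|split; [lia|split; [lia|]]]. intros p1 Hp1; split. apply Unm; auto; lia. apply Mat; auto.
  - assert (Hua : forall p, In p I -> snd p <> a) by (intros p Hp E; apply Hna; eauto).
    assert (Hub : forall p, In p I -> snd p <> b) by (intros p Hp E; apply Hnb; eauto).
    exists (below I a + 1)%nat, (below I b + 2)%nat.
    assert (below I a <= below I b)%nat.
    { destruct (below_cases I a) as [E|[q [Hq1 [Hq2 Hq3]]]]. lia. rewrite <- Hq3. apply below_ge; auto. lra. }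
    destruct (Lfacts b) as [L1 _].
    split; [lia|split; [lia|split; [lia|]]]. intros p1 Hp1; split; apply Unm; auto; lia.
Qed.

Open Scope nat_scope.

Definition rof (c : nat) : rcc8 := match c with 0 => DC | 1 => EC | 2 => PO | 3 => EQ | 4 => TPP | 5 => NTPP | 6 => TPPI | _ => NTPPI end.
Lemma rof_code r : rof (rcc8_code r) = r. Proof. destruct r; auto. Qed.
Lemma code_rof c : c < 8 -> rcc8_code (rof c) = c.
Proof. intros. destruct c as [|[|[|[|[|[|[|[|c]]]]]]]]; simpl; auto; lia. Qed.

Lemma isbox_spec j : isbox j = true <-> tag j = 3 /\ boxr j < 8.
Proof. unfold isbox, boxr. rewrite andb_true_iff, Nat.eqb_eq, Nat.ltb_lt. tauto. Qed.
Lemma boxa_lt j : isbox j = true -> boxa j < j.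
Proof. intros H. apply isbox_spec in H. unfold boxa. pose proof (sndu_le (pay j)). pose proof (pay_lt j). lia. Qed.

Fixpoint satf {n} (W : rect n -> Prop) (V : nat -> rect n -> Prop) (f j : nat) (w : rect n) : Prop :=
  match f with 0 => False | S f' =>
    if tag j =? 0 then V (pay j) w
    else if tag j =? 1 then ~ satf W V f' (pay j) w
    else if tag j =? 2 then satf W V f' (fstu (pay j)) w /\ satf W V f' (sndu (pay j)) w
    else if isbox j then forall t, W t -> rcc8_rel (rof (boxr j)) w t -> satf W V f' (boxa j) t
    else False end.

Lemma satf_indep {n} W V j : forall f1 f2 (w : rect n), j < f1 -> j < f2 -> (satf W V f1 j w <-> satf W V f2 j w).
Proof.
  induction j as [j IH] using (well_founded_induction lt_wf).
  intros [|f1] [|f2] w H1 H2; try lia. simpl.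
  destruct (Nat.eqb_spec (tag j) 0); [tauto|].
  assert (P : pay j < j) by (apply pay_lt; lia).
  destruct (Nat.eqb_spec (tag j) 1). { rewrite (IH (pay j) P f1 f2); auto; try lia. tauto. }
  destruct (Nat.eqb_spec (tag j) 2).
  { pose proof (fstu_le (pay j)); pose proof (sndu_le (pay j)).
    rewrite (IH (fstu (pay j)) ltac:(lia) f1 f2), (IH (sndu (pay j)) ltac:(lia) f1 f2); try lia. tauto. }
  destruct (isbox j) eqn:B; [|tauto]. pose proof (boxa_lt j B).
  split; intros Hb t Ht Hr; specialize (Hb t Ht Hr); rewrite (IH (boxa j) ltac:(lia) f1 f2) in *; auto; lia.
Qed.

Definition tv {n} W V j (w : rect n) := satf W V (S j) j w.
Lemma tv_unfold {n} W V j (w : rect n) : tv W V j w <->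
    (if tag j =? 0 then V (pay j) w
    else if tag j =? 1 then ~ tv W V (pay j) w
    else if tag j =? 2 then tv W V (fstu (pay j)) w /\ tv W V (sndu (pay j)) w
    else if isbox j then forall t, W t -> rcc8_rel (rof (boxr j)) w t -> tv W V (boxa j) t
    else False).
Proof.
  unfold tv at 1. simpl. destruct (Nat.eqb_spec (tag j) 0); [tauto|].
  assert (P : pay j < j) by (apply pay_lt; lia).
  destruct (Nat.eqb_spec (tag j) 1). { unfold tv. rewrite (satf_indep W V (pay j) j (S (pay j))); try lia. tauto. }
  destruct (Nat.eqb_spec (tag j) 2).
  { pose proof (fstu_le (pay j)); pose proof (sndu_le (pay j)). unfold tv.
    rewrite (satf_indep W V (fstu (pay j)) j (S (fstu (pay j)))), (satf_indep W V (sndu (pay j)) j (S (sndu (pay j)))); try lia. tauto. }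
  destruct (isbox j) eqn:B; [|tauto]. pose proof (boxa_lt j B). unfold tv.
  split; intros Hb t Ht Hr; specialize (Hb t Ht Hr);
  rewrite (satf_indep W V (boxa j) j (S (boxa j))) in *; auto; lia.
Qed.

Lemma tv_code {n} W V phi : forall (w : rect n), tv W V (code phi) w <-> sat W V w phi.
Proof.
  induction phi; intros w; rewrite tv_unfold; simpl code; rewrite ?tag_c, ?pay_c; simpl.
  - tauto.
  - rewrite IHphi; tauto.
  - rewrite ?fstu_cpair, ?sndu_cpair, IHphi1, IHphi2; tauto.
  - assert (isbox (cpair 3 (cpair (rcc8_code r) (code phi))) = true).
    { apply isbox_spec. unfold boxr. rewrite tag_c, pay_c, fstu_cpair. split; auto. apply rcc8_code_lt. }
    rewrite H. unfold boxr, boxa. rewrite pay_c, fstu_cpair, sndu_cpair, rof_code.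
    split; intros H1 t Ht Hr; apply IHphi; auto.
Qed.

Definition tb {n} W V j (w : rect n) : bool := if excluded_middle_informative (tv W V j w) then true else false.
Lemma tb_true {n} W V j (w : rect n) : tb W V j w = true <-> tv W V j w.
Proof. unfold tb. destruct (excluded_middle_informative _); split; auto; discriminate. Qed.
Definition Hset {n} W V k (w : rect n) := map (fun j => tb W V j w) (seq 0 (S k)).
Lemma Hv_Hset {n} W V k (w : rect n) j : j <= k -> Hv (Hset W V k w) j = tb W V j w.
Proof. intros H. unfold Hv, Hset. rewrite nth_indep with (d' := tb W V 0 w).
  rewrite (map_nth (fun j => tb W V j w) (seq 0 (S k)) 0 j), seq_nth; auto; lia. rewrite length_map, length_seq; lia. Qed.

Lemma lists_of_in {A} m (L : list A) l : In l (lists_of m L) <-> length l = m /\ forall x, In x l -> In x L.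
Proof.
  revert l; induction m; intros l; simpl.
  - split. intros [<-|[]]; simpl; split; auto; intros _ []. intros [H _]; destruct l; simpl in *; auto; lia.
  - fold (lists_of m L). rewrite in_flat_map. split.
    + intros [l' [H1 H2]]. apply in_map_iff in H2. destruct H2 as [x [<- H2]]. apply IHm in H1.
      simpl; split; [lia|]. intros y [<-|Hy]; auto. apply H1; auto.
    + intros [H1 H2]. destruct l as [|x l']; simpl in H1; [lia|]. exists l'. split.
      apply IHm; split; [lia|]. intros; apply H2; simpl; auto. apply in_map_iff. exists x; split; auto. apply H2; simpl; auto.
Qed.
Lemma Hset_in {n} W V k (w : rect n) : In (Hset W V k w) (lists_of (S k) [false; true]).
Proof. apply lists_of_in. unfold Hset. rewrite length_map, length_seq. split; auto.
  intros x _. destruct x; simpl; auto. Qed.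
Lemma pairsB_in B a b : In (a, b) (pairsB B) <-> 1 <= a /\ a < b /\ b <= B.
Proof. unfold pairsB. rewrite in_flat_map. split.
  - intros [a' [H1 H2]]. apply in_map_iff in H2. destruct H2 as [b' [E H2]]. inversion E; subst.
    apply in_seq in H1, H2. lia.
  - intros H. exists a. split. apply in_seq; lia. apply in_map. apply in_seq; lia.
Qed.
Lemma obls_in n k c i j : In (i, j) (obls n k c) <-> i < length c /\ j <= k /\ unw n c i j = true.
Proof. unfold obls. rewrite in_flat_map. split.
  - intros [i' [H1 H2]]. apply in_map_iff in H2. destruct H2 as [j' [E H2]]. inversion E; subst.
    apply filter_In in H2. destruct H2 as [H2 H3]. apply in_seq in H1, H2. repeat split; auto; lia.
  - intros [H1 [H2 H3]]. exists i. split. apply in_seq; lia. apply in_map. apply filter_In. split; auto. apply in_seq; lia.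
Qed.
Lemma nth_scale c i : nth i (scale c) dpt = scalept (nth i c dpt).
Proof. unfold scale. change dpt with (scalept dpt) at 1. apply map_nth. Qed.
Lemma length_scale c : length (scale c) = length c. Proof. apply length_map. Qed.
Lemma nth_map00 (l : list (nat*nat)) m : nth m (map (fun ab : nat * nat => (3 * fst ab, 3 * snd ab)) l) (0,0) =
  (3 * fst (nth m l (0,0)), 3 * snd (nth m l (0,0))).
Proof. revert m; induction l; destruct m; simpl; auto. Qed.
Lemma nv_scale p m e : nv (fst (scalept p)) m e = 3 * nv (fst p) m e.
Proof. unfold nv, scalept, lo_, hi_. cbn [fst]. rewrite nth_map00. destruct e; reflexivity. Qed.
Lemma fold_max_ge l acc : acc <= fold_left Nat.max l acc /\ forall x, In x l -> x <= fold_left Nat.max l acc.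
Proof. revert acc; induction l; intros; simpl. split; auto. intros _ [].
  destruct (IHl (Nat.max acc a)) as [A B]. split. lia. intros x [<-|H]; auto. lia. Qed.
Lemma maxc_ge c p m e : In p c -> nv (fst p) m e <= maxc c.
Proof.
  intros Hp. unfold nv, lo_, hi_. destruct (lt_dec m (length (fst p))).
  - assert (In (nth m (fst p) (0,0)) (fst p)) by (apply nth_In; auto).
    unfold maxc. apply fold_max_ge. apply in_flat_map. exists p; split; auto. apply in_flat_map.
    exists (nth m (fst p) (0,0)). split; auto. destruct e; simpl; auto.
  - rewrite nth_overflow by lia. destruct e; simpl; lia.
Qed.
Lemma rect_ext {n} (s t : rect n) : EqR s t -> s = t.
Proof. intros H. destruct s as [l1 h1 p1], t as [l2 h2 p2]. unfold EqR in H; simpl in H.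
  assert (l1 = l2) by (apply functional_extensionality; intros; apply H).
  assert (h1 = h2) by (apply functional_extensionality; intros; apply H). subst. f_equal. apply proof_irrelevance. Qed.
Lemma relb_rof n c S T : c < 8 -> relb n c S T = relb n (rcc8_code (rof c)) S T.
Proof. intros. rewrite code_rof; auto. Qed.
Lemma relb_EQ n S T : relb n (rcc8_code EQ) S T = eqrb n S T. Proof. reflexivity. Qed.

Open Scope nat_scope.

Lemma tb_neg {n} W V j (w : rect n) : tag j = 1 -> tb W V j w = negb (tb W V (pay j) w).
Proof. intros H. apply eq_true_iff_eq. rewrite tb_true, negb_true_iff, <- not_true_iff_false, tb_true.
  rewrite tv_unfold, H. simpl. tauto. Qed.
Lemma tb_and {n} W V j (w : rect n) : tag j = 2 -> tb W V j w = tb W V (fstu (pay j)) w && tb W V (sndu (pay j)) w.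
Proof. intros H. apply eq_true_iff_eq. rewrite tb_true, andb_true_iff, !tb_true.
  rewrite tv_unfold, H. simpl. tauto. Qed.
Lemma tb_box {n} W V j (w : rect n) : isbox j = true ->
  (tb W V j w = true <-> forall t, W t -> rcc8_rel (rof (boxr j)) w t -> tb W V (boxa j) t = true).
Proof. intros H. rewrite tb_true, tv_unfold. pose proof H as H'. apply isbox_spec in H'. destruct H' as [E _].
  rewrite E, H. simpl. split; intros X t Ht Hr; apply tb_true; apply X; auto. Qed.

Definition Real {n} (W : rect n -> Prop) V k (w0 : rect n) (c : cfg) :=
 exists ws : list (rect n), length ws = length c /\ (forall w, In w ws -> W w) /\
 (forall i, i < length c -> snd (nth i c dpt) = Hset W V k (nth i ws w0)) /\
 (forall i i', i < length c -> i' < length c -> Agree (fst (nth i c dpt)) (fst (nth i' c dpt)) (nth i ws w0) (nth i' ws w0)) /\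
 (forall i m e, i < length c -> m < n -> 1 <= nv (fst (nth i c dpt)) m e).

Lemma propok_Hset {n} W V k (w : rect n) : propok k (Hset W V k w) = true.
Proof.
  unfold propok. rewrite forallb_forall. intros j Hj. apply in_seq in Hj.
  assert (Pj : 1 <= tag j -> pay j < j) by apply pay_lt.
  rewrite andb_true_iff; split.
  - destruct (Nat.eqb_spec (tag j) 1); auto. rewrite !Hv_Hset by lia. rewrite (tb_neg W V j w e).
    destruct (tb W V (pay j) w); auto.
  - destruct (Nat.eqb_spec (tag j) 2); auto. pose proof (fstu_le (pay j)); pose proof (sndu_le (pay j)).
    rewrite !Hv_Hset by lia. rewrite (tb_and W V j w e). apply eqb_reflx.
Qed.

Lemma Real_consistent {n} (W : rect n -> Prop) V k w0 (c : cfg) : Real W V k w0 c -> consistent n k c = true.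
Proof.
  intros [ws [Hl [HW [HH [HA Hp]]]]]. unfold consistent. rewrite andb_true_iff, !forallb_forall. split.
  - intros p Hp'. destruct (In_nth c p dpt Hp') as [i [Hi <-]]. rewrite HH by auto. apply propok_Hset.
  - intros p Hp'. rewrite forallb_forall. intros q Hq'.
    destruct (In_nth c p dpt Hp') as [i [Hi <-]]. destruct (In_nth c q dpt Hq') as [i' [Hi' <-]].
    specialize (HA i i' Hi Hi'). unfold pairok. rewrite andb_true_iff, forallb_forall. split.
    + destruct (eqrb n _ _) eqn:E; [|reflexivity]. cbn [implb]. rewrite <- relb_EQ, (transfer _ _ _ _ _ HA) in E.
      unfold rcc8_rel, rcc8_sets in E. apply eq_char, rect_ext in E. rewrite (HH i), (HH i'), E by auto.
      apply forallb_forall. intros; apply eqb_reflx.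
    + intros j Hj. apply in_seq in Hj. destruct (isbox j) eqn:B; simpl; auto.
      destruct (relb n (boxr j) _ _) eqn:R; simpl; auto.
      assert (boxr j < 8) by (apply isbox_spec in B; tauto).
      rewrite relb_rof, (transfer _ _ _ _ _ HA) in R by auto.
      pose proof (boxa_lt j B). rewrite !HH by auto. rewrite !Hv_Hset by lia.
      destruct (tb W V j (nth i ws w0)) eqn:T; simpl; auto.
      pose proof (proj1 (tb_box W V j _ B) T) as T'. apply T'; auto. apply HW. apply nth_In; lia.
Qed.

Lemma Agree_scale {n} p q (s t : rect n) : Agree (fst p) (fst q) s t -> Agree (fst (scalept p)) (fst (scalept q)) s t.
Proof. unfold Agree. intros H i e e'. rewrite !nv_scale. destruct (H i e e') as [A [B C]].
  split; [|split]; (split; intros X; [apply A || apply B || apply C| ]); try lia.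
  all: first [apply A in X | apply B in X | apply C in X]; lia. Qed.

Lemma Real_scale {n} (W : rect n -> Prop) V k w0 c : Real W V k w0 c -> Real W V k w0 (scale c).
Proof.
  intros [ws [Hl [HW [HH [HA Hp]]]]]. exists ws. rewrite length_scale. split; [auto|split; [auto|split; [|split]]].
  - intros i Hi. rewrite nth_scale. apply HH; auto.
  - intros i i' Hi Hi'. rewrite !nth_scale. apply Agree_scale; auto.
  - intros i m e Hi Hm. rewrite nth_scale, nv_scale. specialize (Hp i m e Hi Hm). lia.
Qed.

Lemma unw_spec n c i j : unw n c i j = true -> isbox j = true /\ Hv (snd (nth i c dpt)) j = false.
Proof. unfold unw. rewrite !andb_true_iff, !negb_true_iff. tauto. Qed.

Definition mkR {n} (g : coord n -> nat * nat) : rc :=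
  map (fun m => match lt_dec m n with left Hm => g (exist _ m Hm) | right _ => (0,0) end) (seq 0 n).
Lemma mkR_nth {n} (g : coord n -> nat * nat) (i : coord n) : nth (proj1_sig i) (mkR g) (0,0) = g i.
Proof.
  destruct i as [m Hm]; simpl. unfold mkR.
  set (F := fun m => match lt_dec m n with left Hm => g (exist _ m Hm) | right _ => (0,0) end).
  rewrite nth_indep with (d' := F 0) by (rewrite length_map, length_seq; auto).
  rewrite map_nth, seq_nth by auto. simpl. unfold F. destruct (lt_dec m n); [|lia]. f_equal. f_equal. apply proof_irrelevance.
Qed.
Lemma mkR_in {n} (g : coord n -> nat * nat) B : (forall i, In (g i) (pairsB B)) -> In (mkR g) (lists_of n (pairsB B)).
Proof.
  intros H. apply lists_of_in. unfold mkR. rewrite length_map, length_seq. split; auto.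
  intros x Hx. apply in_map_iff in Hx. destruct Hx as [m [<- Hm]]. apply in_seq in Hm.
  destruct (lt_dec m n); [apply H|lia].
Qed.

Lemma Real_ext {n} (W : rect n -> Prop) V k w0 c : Real W V k w0 c -> exists c', In c' (ext n k c) /\ Real W V k w0 c'.
Proof.
  intros HR. pose proof (Real_scale W V k w0 c HR) as HR'. set (c' := scale c) in *.
  destruct HR as [ws0 [_ [_ [_ [_ Hp0]]]]].
  unfold ext. fold c'. destruct (Nat.eqb_spec (length (obls n k c')) 0) as [E|E].
  { exists c'. split; simpl; auto. }
  destruct (nth 0 (obls n k c') (0,0)) as [i0 j] eqn:Eo.
  assert (Ho : In (i0, j) (obls n k c')) by (rewrite <- Eo; apply nth_In; lia).
  apply obls_in in Ho. destruct Ho as [Hi0 [Hj Hu]]. apply unw_spec in Hu. destruct Hu as [B Hf].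
  destruct HR' as [ws [Hl [HW [HH [HA Hp]]]]].
  set (w := nth i0 ws w0).
  rewrite HH, Hv_Hset in Hf by auto.
  assert (Hex : exists t, W t /\ rcc8_rel (rof (boxr j)) w t /\ tb W V (boxa j) t = false).
  { apply NNPP. intros X. rewrite <- not_true_iff_false in Hf. apply Hf.
    apply tb_box; auto. intros t Ht Hr. apply NNPP. intros Y. apply X. exists t.
    split; auto. split; auto. apply not_true_iff_false; auto. }
  destruct Hex as [t [Ht [Hr Htb]]].
  set (vals := fun (i : coord n) => flat_map (fun i' => map (fun e => (nv (fst (nth i' c' dpt)) (proj1_sig i) e, rv (nth i' ws w0) i e)) [false; true]) (seq 0 (length c'))).
  assert (Hvals : forall i p, In p (vals i) -> exists i' e, i' < length c' /\ p = (nv (fst (nth i' c' dpt)) (proj1_sig i) e, rv (nth i' ws w0) i e)).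
  { intros i p Hp'. unfold vals in Hp'. apply in_flat_map in Hp'. destruct Hp' as [i' [H1 H2]]. apply in_map_iff in H2.
    destruct H2 as [e [<- _]]. apply in_seq in H1. exists i', e; split; auto; lia. }
  assert (Hg : forall i : coord n, exists xy : nat * nat, 1 <= fst xy /\ fst xy < snd xy /\ snd xy <= maxc c' + 2 /\
     forall p, In p (vals i) -> cmp (fst xy) (fst p) (lo t i) (snd p) /\ cmp (snd xy) (fst p) (hi t i) (snd p)).
  { intros i. destruct (gap (vals i) (lo t i) (hi t i) (maxc c')) as [x [y [G1 [G2 [G3 G4]]]]].
    - apply lohi.
    - intros p q Hp' Hq'. apply Hvals in Hp', Hq'. destruct Hp' as [a [e [Ha ->]]], Hq' as [b [e' [Hb ->]]].
      simpl. destruct (HA a b Ha Hb i e e') as [X [_ Z]]. auto.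
    - intros p Hp'. apply Hvals in Hp'. destruct Hp' as [a [e [Ha ->]]]. simpl.
      assert (Ea : nv (fst (nth a c' dpt)) (proj1_sig i) e = 3 * nv (fst (nth a c dpt)) (proj1_sig i) e)
        by (unfold c'; rewrite nth_scale, nv_scale; auto).
      assert (a < length c) by (unfold c' in Ha; rewrite length_scale in Ha; auto).
      pose proof (Hp0 a (proj1_sig i) e H (proj2_sig i)).
      split. lia. split. rewrite Ea; eexists; reflexivity. apply maxc_ge. apply nth_In; auto.
    - exists (x, y); simpl; auto. }
  set (g := fun i => proj1_sig (constructive_indefinite_description _ (Hg i))).
  assert (Hgi : forall i, 1 <= fst (g i) /\ fst (g i) < snd (g i) /\ snd (g i) <= maxc c' + 2 /\
     forall p, In p (vals i) -> cmp (fst (g i)) (fst p) (lo t i) (snd p) /\ cmp (snd (g i)) (fst p) (hi t i) (snd p)).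
  { intros i. unfold g. destruct (constructive_indefinite_description _ (Hg i)); simpl; auto. }
  set (R' := mkR g).
  assert (NR : forall i e, nv R' (proj1_sig i) e = if e then snd (g i) else fst (g i)).
  { intros i e. unfold nv, lo_, hi_, R'. rewrite mkR_nth. destruct e; auto. }
  set (np := (R', Hset W V k t)).
  assert (Hold : forall a, a < length c' -> Agree (fst (nth a c' dpt)) R' (nth a ws w0) t).
  { intros a Ha i e e'. rewrite NR.
    assert (In (nv (fst (nth a c' dpt)) (proj1_sig i) e, rv (nth a ws w0) i e) (vals i)).
    { unfold vals. apply in_flat_map. exists a. split. apply in_seq; lia. apply in_map_iff. exists e; split; auto. destruct e; simpl; auto. }
    destruct (Hgi i) as [_ [_ [_ G]]]. destruct (G _ H) as [C1 C2]. simpl in C1, C2.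
    destruct e'; simpl; [destruct C2 as [X [Y Z]]|destruct C1 as [X [Y Z]]]; (split; [|split]); auto; split; intros; symmetry; apply Z; auto. }
  assert (Hnew : Agree R' R' t t).
  { intros i e e'. rewrite !NR. destruct (Hgi i) as [G1 [G2 _]]. pose proof (lohi t i).
    destruct e, e'; simpl; repeat split; intros; try lia; try lra. }
  assert (HR2 : Real W V k w0 (c' ++ [np])).
  { exists (ws ++ [t]). rewrite !length_app, Hl. simpl.
    assert (NC : forall a, a < S (length c') -> (a < length c' /\ nth a (c' ++ [np]) dpt = nth a c' dpt /\ nth a (ws ++ [t]) w0 = nth a ws w0) \/ (a = length c' /\ nth a (c' ++ [np]) dpt = np /\ nth a (ws ++ [t]) w0 = t)).
    { intros a Ha. destruct (Nat.eq_dec a (length c')).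
      - right. subst. rewrite app_nth2, Nat.sub_diag by lia. rewrite app_nth2 by lia. rewrite Hl, Nat.sub_diag. auto.
      - left. rewrite !app_nth1 by lia. split; auto. lia. }
    split; [lia|]. split; [|split; [|split]].
    - intros x Hx. apply in_app_or in Hx. destruct Hx as [Hx|[<-|[]]]; auto.
    - intros a Ha. destruct (NC a ltac:(lia)) as [[A [-> ->]]|[A [-> ->]]]; auto.
    - intros a b Ha Hb. destruct (NC a ltac:(lia)) as [[A [-> ->]]|[A [-> ->]]];
      destruct (NC b ltac:(lia)) as [[B' [-> ->]]|[B' [-> ->]]]; auto. apply Agree_sym; auto.
    - intros a m e Ha Hm. destruct (NC a ltac:(lia)) as [[A [E1 E2]]|[A [E1 E2]]]; rewrite E1; auto.
      simpl. pose proof (NR (exist _ m Hm) e). simpl in H. rewrite H. destruct (Hgi (exist _ m Hm)) as [G1 [G2 _]].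
      destruct e; lia. }
  exists (c' ++ [np]). split; auto.
  unfold extc. apply in_map_iff. exists np. split; auto. apply filter_In. split.
  - unfold cands. apply in_flat_map. exists R'. split. apply mkR_in. intros i. destruct (Hgi i) as [G1 [G2 [G3 _]]].
    destruct (g i) as [x y] eqn:Eg. apply pairsB_in. simpl in *. lia.
    apply in_map. apply Hset_in.
  - simpl. rewrite !andb_true_iff. split; [split|].
    + assert (boxr j < 8) by (apply isbox_spec in B; tauto). rewrite relb_rof by auto.
      apply (transfer _ _ _ _ _ (Hold i0 Hi0)). auto.
    + rewrite Hv_Hset. rewrite Htb; auto. pose proof (boxa_lt j B). lia.
    + apply (Real_consistent W V k w0). auto.
Qed.

Lemma nv_root n m e : m < n -> nv (repeat (1,2) n) m e = if e then 2 else 1.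
Proof. intros H. unfold nv, lo_, hi_. rewrite nth_indep with (d' := (1,2)) by (rewrite repeat_length; auto).
  rewrite nth_repeat. destruct e; auto. Qed.

Lemma soundness n phi (W : rect n -> Prop) V s0 : W s0 -> ~ sat W V s0 phi ->
  forall d, Sd n (code phi) d <> [].
Proof.
  intros Hs0 Hn. set (k := code phi).
  assert (forall d, exists c, In c (Sd n k d) /\ Real W V k s0 c).
  { induction d.
    - set (c0 := [(repeat (1,2) n, Hset W V k s0)]).
      assert (R0 : Real W V k s0 c0).
      { exists [s0]. split; auto. split. intros w [<-|[]]; auto. simpl.
        split; [|split].
        - intros i Hi. destruct i; [auto|lia].
        - intros i i' Hi Hi'. destruct i; [|lia]. destruct i'; [|lia]. simpl.
          intros x e e'. rewrite !nv_root by (destruct x; auto). pose proof (lohi s0 x).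
          destruct e, e'; simpl; repeat split; intros; try lia; try lra.
        - intros i m e Hi Hm. destruct i; [|lia]. simpl. rewrite nv_root by auto. destruct e; lia. }
      exists c0. split; auto. simpl. unfold S0. apply filter_In. split.
      + apply in_map_iff. exists (Hset W V k s0). split; auto. apply filter_In. split. apply Hset_in.
        rewrite Hv_Hset by lia. apply negb_true_iff, not_true_iff_false. rewrite tb_true. unfold k. rewrite tv_code. auto.
      + apply (Real_consistent W V k s0). auto.
    - destruct IHd as [c [Hc HRc]]. destruct (Real_ext W V k s0 c HRc) as [c' [H1 H2]].
      exists c'. split; auto. simpl. unfold step. apply in_flat_map. eauto. }
  intros d E. destruct (H d) as [c [Hc _]]. fold k in E. rewrite E in Hc. destruct Hc.
Qed.

Open Scope nat_scope.

Lemma iter_step_app n k d l1 l2 : Nat.iter d (step n k) (l1 ++ l2) = Nat.iter d (step n k) l1 ++ Nat.iter d (step n k) l2.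
Proof. induction d; simpl; auto. rewrite IHd. unfold step. apply flat_map_app. Qed.
Lemma iter_nonempty n k d l : Nat.iter d (step n k) l <> [] <-> exists c, In c l /\ Nat.iter d (step n k) [c] <> [].
Proof.
  induction l; simpl.
  - split. intros H; exfalso; apply H. clear. induction d; simpl; auto. rewrite IHd; auto. intros [c [[] _]].
  - change (a :: l) with ([a] ++ l). rewrite iter_step_app. split.
    + intros H. destruct (Nat.iter d (step n k) [a]) eqn:E. simpl in H. apply IHl in H. destruct H as [c [H1 H2]]; eauto.
      exists a; split; auto. rewrite E; discriminate.
    + intros [c [[<-|H1] H2]]. intros E. apply app_eq_nil in E. tauto.
      intros E. apply app_eq_nil in E. apply (proj2 IHl); eauto. tauto.
Qed.
Lemma iter_antitone n k d c : Nat.iter (S d) (step n k) [c] <> [] -> Nat.iter d (step n k) [c] <> [].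
Proof. simpl. intros H E. rewrite E in H. apply H; reflexivity. Qed.
Lemma pigeon {A} (P : nat -> A -> Prop) (l : list A) : (forall d c, P (S d) c -> P d c) ->
  (forall d, exists c, In c l /\ P d c) -> exists c, In c l /\ forall d, P d c.
Proof.
  intros Hm H. apply NNPP. intros Hn.
  assert (forall c, In c l -> exists d, ~ P d c).
  { intros c Hc. apply NNPP. intros X. apply Hn. exists c. split; auto. intros d. apply NNPP. intros Y. apply X; eauto. }
  assert (Hmono : forall c d d', d <= d' -> P d' c -> P d c). { intros c d d' Hd. induction Hd; auto. }
  assert (exists D, forall c, In c l -> ~ P D c).
  { clear Hn H. induction l. exists 0. intros c []. 
    destruct IHl as [D HD]. intros; apply H0; simpl; auto. destruct (H0 a (or_introl eq_refl)) as [d Hd].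
    exists (Nat.max D d). intros c [<-|Hc] X. apply Hd. eapply Hmono; [|exact X]; lia.
    apply (HD c Hc). eapply Hmono; [|exact X]; lia. }
  destruct H1 as [D HD]. destruct (H D) as [c [H1 H2]]. eapply HD; eauto.
Qed.
Definition good n k c := forall d, Nat.iter d (step n k) [c] <> [].
Lemma good_next n k c : good n k c -> exists c', In c' (ext n k c) /\ good n k c'.
Proof.
  intros H. apply (pigeon (fun d c' => Nat.iter d (step n k) [c'] <> [])). apply iter_antitone.
  intros d. specialize (H (S d)). rewrite Nat.iter_succ_r in H. unfold step at 2 in H. simpl in H.
  rewrite app_nil_r in H. apply iter_nonempty in H. auto.
Qed.
Lemma good_init n k : (forall d, Sd n k d <> []) -> exists c, In c (S0 n k) /\ good n k c.
Proof.
  intros H. apply (pigeon (fun d c' => Nat.iter d (step n k) [c'] <> [])). apply iter_antitone.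
  intros d. apply iter_nonempty. apply H.
Qed.

Lemma lo_scale p i : lo_ (fst (scalept p)) i = 3 * lo_ (fst p) i. Proof. apply (nv_scale p i false). Qed.
Lemma hi_scale p i : hi_ (fst (scalept p)) i = 3 * hi_ (fst p) i. Proof. apply (nv_scale p i true). Qed.
Lemma leb3 a b : (3 * a <=? 3 * b) = (a <=? b). Proof. destruct (Nat.leb_spec (3*a) (3*b)), (Nat.leb_spec a b); auto; lia. Qed.
Lemma ltb3 a b : (3 * a <? 3 * b) = (a <? b). Proof. destruct (Nat.ltb_spec (3*a) (3*b)), (Nat.ltb_spec a b); auto; lia. Qed.
Lemma eqb3 a b : (3 * a =? 3 * b) = (a =? b). Proof. destruct (Nat.eqb_spec (3*a) (3*b)), (Nat.eqb_spec a b); auto; lia. Qed.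
Lemma forallb_ext' {A} (f g : A -> bool) l : (forall x, f x = g x) -> forallb f l = forallb g l.
Proof. intros H; induction l; simpl; auto. rewrite H, IHl; auto. Qed.
Lemma relb_scale n r p q : relb n r (fst (scalept p)) (fst (scalept q)) = relb n r (fst p) (fst q).
Proof.
  assert (M : meetsb n (fst (scalept p)) (fst (scalept q)) = meetsb n (fst p) (fst q)).
  { unfold meetsb. apply forallb_ext'. intros; rewrite !lo_scale, !hi_scale, !leb3; auto. }
  assert (M' : meetsb n (fst (scalept q)) (fst (scalept p)) = meetsb n (fst q) (fst p)).
  { unfold meetsb. apply forallb_ext'. intros; rewrite !lo_scale, !hi_scale, !leb3; auto. }
  assert (IM : forall p q, imeetsb n (fst (scalept p)) (fst (scalept q)) = imeetsb n (fst p) (fst q)).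
  { intros. unfold imeetsb. apply forallb_ext'. intros; rewrite !lo_scale, !hi_scale, !ltb3; auto. }
  assert (SB : forall p q, subb n (fst (scalept p)) (fst (scalept q)) = subb n (fst p) (fst q)).
  { intros. unfold subb. apply forallb_ext'. intros; rewrite !lo_scale, !hi_scale, !leb3; auto. }
  assert (ISB : forall p q, isubb n (fst (scalept p)) (fst (scalept q)) = isubb n (fst p) (fst q)).
  { intros. unfold isubb. apply forallb_ext'. intros; rewrite !lo_scale, !hi_scale, !ltb3; auto. }
  assert (EQB : forall p q, eqrb n (fst (scalept p)) (fst (scalept q)) = eqrb n (fst p) (fst q)).
  { intros. unfold eqrb. apply forallb_ext'. intros; rewrite !lo_scale, !hi_scale, !eqb3; auto. }
  unfold relb. rewrite M, IM, !SB, !ISB, !EQB. auto.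
Qed.
Lemma eqrb_scale n p q : eqrb n (fst (scalept p)) (fst (scalept q)) = eqrb n (fst p) (fst q).
Proof. apply (relb_scale n 3). Qed.
Lemma pairok_scale n k p q : pairok n k (scalept p) (scalept q) = pairok n k p q.
Proof. unfold pairok. rewrite eqrb_scale. f_equal. apply forallb_ext'. intros j. rewrite relb_scale. auto. Qed.
Lemma forallb_map' {A B} (f : B -> bool) (g : A -> B) l : forallb f (map g l) = forallb (fun x => f (g x)) l.
Proof. induction l; simpl; auto. rewrite IHl; auto. Qed.
Lemma existsb_map' {A B} (f : B -> bool) (g : A -> B) l : existsb f (map g l) = existsb (fun x => f (g x)) l.
Proof. induction l; simpl; auto. rewrite IHl; auto. Qed.
Lemma consistent_scale n k c : consistent n k (scale c) = consistent n k c.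
Proof.
  unfold consistent, scale. f_equal.
  - induction c; simpl; auto. rewrite IHc; auto.
  - rewrite forallb_map'. apply forallb_ext'. intros p. rewrite forallb_map'. apply forallb_ext'. intros q. apply pairok_scale.
Qed.
Lemma witnessed_scale n c p j : witnessed n (scale c) (scalept p) j = witnessed n c p j.
Proof. unfold witnessed, scale. rewrite existsb_map'. f_equal. apply functional_extensionality; intros q. rewrite relb_scale; auto. Qed.
Lemma unw_scale n c i j : unw n (scale c) i j = unw n c i j.
Proof. unfold unw. rewrite nth_scale, witnessed_scale. auto. Qed.

Lemma nx_ex n k c : exists c', good n k c -> In c' (ext n k c) /\ good n k c'.
Proof. destruct (classic (good n k c)) as [H|H]. destruct (good_next n k c H) as [c' Hc]; eauto. exists c; tauto. Qed.
Definition nx n k c : cfg := proj1_sig (constructive_indefinite_description _ (nx_ex n k c)).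
Lemma nx_spec n k c : good n k c -> In (nx n k c) (ext n k c) /\ good n k (nx n k c).
Proof. unfold nx. destruct (constructive_indefinite_description _ _); simpl; auto. Qed.
Definition chain n k c0 t := Nat.iter t (nx n k) c0.
Lemma chain_good n k c0 t : good n k c0 -> good n k (chain n k c0 t).
Proof. intros H. induction t; simpl; auto. apply nx_spec; auto. Qed.
Lemma chain_ext n k c0 t : good n k c0 -> In (chain n k c0 (S t)) (ext n k (chain n k c0 t)).
Proof. intros H. simpl. apply nx_spec. apply chain_good; auto. Qed.

Lemma ext_cases n k c c' : In c' (ext n k c) ->
  (length (obls n k (scale c)) = 0 /\ c' = scale c) \/
  (length (obls n k (scale c)) <> 0 /\ exists np, c' = scale c ++ [np] /\ In np (cands n k (scale c)) /\
     relb n (boxr (snd (nth 0 (obls n k (scale c)) (0,0)))) (fst (nth (fst (nth 0 (obls n k (scale c)) (0,0))) (scale c) dpt)) (fst np) = true /\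
     Hv (snd np) (boxa (snd (nth 0 (obls n k (scale c)) (0,0)))) = false /\ consistent n k (scale c ++ [np]) = true).
Proof.
  unfold ext. destruct (Nat.eqb_spec (length (obls n k (scale c))) 0) as [E|E].
  - intros [<-|[]]. left; auto.
  - intros H. right. split; auto. unfold extc in H. apply in_map_iff in H. destruct H as [np [<- H]].
    apply filter_In in H. destruct H as [H1 H2]. rewrite !andb_true_iff, negb_true_iff in H2.
    exists np. tauto.
Qed.

Definition wfR n (R : rc) := forall m, m < n -> lo_ R m < hi_ R m.
Definition Inv n k (c : cfg) := consistent n k c = true /\ forall p, In p c -> wfR n (fst p).

Lemma wfR_scale n p : wfR n (fst p) -> wfR n (fst (scalept p)).
Proof. intros H m Hm. rewrite lo_scale, hi_scale. specialize (H m Hm). lia. Qed.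
Lemma cands_wf n k c np : In np (cands n k c) -> wfR n (fst np).
Proof.
  unfold cands. intros H. apply in_flat_map in H. destruct H as [R [H1 H2]]. apply in_map_iff in H2.
  destruct H2 as [h [<- _]]. simpl. apply lists_of_in in H1. destruct H1 as [L H1]. intros m Hm.
  unfold lo_, hi_. assert (In (nth m R (0,0)) R) by (apply nth_In; lia). apply H1 in H.
  destruct (nth m R (0,0)) as [a b]. apply pairsB_in in H. simpl; lia.
Qed.
Lemma Inv_ext n k c c' : Inv n k c -> In c' (ext n k c) -> Inv n k c'.
Proof.
  intros [H1 H2] H. apply ext_cases in H. destruct H as [[_ ->]|[_ [np [-> [A [_ [_ B]]]]]]].
  - split. rewrite consistent_scale; auto. intros p Hp. unfold scale in Hp. apply in_map_iff in Hp.
    destruct Hp as [q [<- Hq]]. apply wfR_scale; auto.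
  - split; auto. intros p Hp. apply in_app_or in Hp. destruct Hp as [Hp|[<-|[]]].
    unfold scale in Hp. apply in_map_iff in Hp. destruct Hp as [q [<- Hq]]. apply wfR_scale; auto.
    eapply cands_wf; eauto.
Qed.
Lemma chain_Inv n k c0 t : good n k c0 -> Inv n k c0 -> Inv n k (chain n k c0 t).
Proof. intros Hg H. induction t; auto. eapply Inv_ext; eauto. apply chain_ext; auto. Qed.
Lemma chain_prefix n k c0 t : good n k c0 -> exists extra, chain n k c0 (S t) = scale (chain n k c0 t) ++ extra.
Proof. intros Hg. pose proof (chain_ext n k c0 t Hg) as H. apply ext_cases in H.
  destruct H as [[_ ->]|[_ [np [-> _]]]]; eauto. exists []; rewrite app_nil_r; auto. Qed.
Lemma chain_nth n k c0 t i : good n k c0 -> i < length (chain n k c0 t) ->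
  nth i (chain n k c0 (S t)) dpt = scalept (nth i (chain n k c0 t) dpt) /\ length (chain n k c0 t) <= length (chain n k c0 (S t)).
Proof. intros Hg Hi. destruct (chain_prefix n k c0 t Hg) as [ex E]. rewrite E. rewrite app_nth1 by (rewrite length_scale; auto).
  rewrite nth_scale, length_app, length_scale. split; auto; lia. Qed.

Lemma pow3_pos t : (0 < 3 ^ t)%R. Proof. apply pow_lt. lra. Qed.
Lemma div_lt_iff a b c : (0 < c)%R -> ((a / c < b / c)%R <-> (a < b)%R).
Proof. intros H. unfold Rdiv. split; intros X.
  - apply Rmult_lt_reg_r with (/ c)%R; auto. apply Rinv_0_lt_compat; auto.
  - apply Rmult_lt_compat_r; auto. apply Rinv_0_lt_compat; auto. Qed.
Lemma div_eq_iff a b c : (0 < c)%R -> ((a / c = b / c)%R <-> a = b).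
Proof. intros H. split; intros X; [|subst; auto]. unfold Rdiv in X.
  apply Rmult_eq_reg_r in X; auto. apply Rinv_neq_0_compat; lra. Qed.
Lemma nat_lt_R a b : (a < b)%nat <-> (INR a < INR b)%R. Proof. split. apply lt_INR. apply INR_lt. Qed.
Lemma nat_eq_R a b : a = b <-> INR a = INR b. Proof. split. intros ->; auto. apply INR_eq. Qed.

Lemma rect_of_ok n t (R : rc) : forall i : coord n,
  (INR (lo_ R (proj1_sig i)) / 3 ^ t < INR (Nat.max (hi_ R (proj1_sig i)) (S (lo_ R (proj1_sig i)))) / 3 ^ t)%R.
Proof. intros i. apply div_lt_iff. apply pow3_pos. apply nat_lt_R. lia. Qed.
Definition rect_of n t (R : rc) : rect n :=
  {| lo := fun i => (INR (lo_ R (proj1_sig i)) / 3 ^ t)%R;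
     hi := fun i => (INR (Nat.max (hi_ R (proj1_sig i)) (S (lo_ R (proj1_sig i)))) / 3 ^ t)%R;
     lo_lt_hi := rect_of_ok n t R |}.
Lemma rv_rect_of n t R (i : coord n) e : wfR n R -> rv (rect_of n t R) i e = (INR (nv R (proj1_sig i) e) / 3 ^ t)%R.
Proof. intros H. specialize (H (proj1_sig i) (proj2_sig i)). destruct e; simpl; auto.
  rewrite Nat.max_l by lia. auto. Qed.
Lemma agree_rect_of n t R1 R2 : wfR n R1 -> wfR n R2 -> Agree R1 R2 (rect_of n t R1) (rect_of n t R2).
Proof.
  intros H1 H2 i e e'. rewrite !rv_rect_of by auto. pose proof (pow3_pos t).
  rewrite !div_lt_iff, div_eq_iff by auto. rewrite <- !nat_lt_R, <- nat_eq_R. tauto.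
Qed.
Lemma rect_of_scale n t p : wfR n (fst p) -> rect_of n (S t) (fst (scalept p)) = rect_of n t (fst p).
Proof.
  intros H. apply rect_ext. intros i. specialize (H (proj1_sig i) (proj2_sig i)). unfold rect_of; cbn [lo hi].
  rewrite lo_scale, hi_scale, !Nat.max_l by lia. rewrite !mult_INR. simpl (INR 3). rewrite <- tech_pow_Rmult.
  pose proof (pow3_pos t). split; field; lra.
Qed.

Lemma propok_neg k H j : propok k H = true -> j <= k -> tag j = 1 -> Hv H j = negb (Hv H (pay j)).
Proof. intros P Hj T. unfold propok in P. rewrite forallb_forall in P. specialize (P j ltac:(apply in_seq; lia)).
  rewrite T in P. simpl in P. apply andb_true_iff in P. destruct P as [P _]. apply eqb_prop in P; auto. Qed.
Lemma propok_and k H j : propok k H = true -> j <= k -> tag j = 2 -> Hv H j = Hv H (fstu (pay j)) && Hv H (sndu (pay j)).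
Proof. intros P Hj T. unfold propok in P. rewrite forallb_forall in P. specialize (P j ltac:(apply in_seq; lia)).
  rewrite T in P. simpl in P. apply eqb_prop in P; auto. Qed.
Lemma pairok_eq n k p q j : pairok n k p q = true -> eqrb n (fst p) (fst q) = true -> j <= k -> Hv (snd p) j = Hv (snd q) j.
Proof. intros P E Hj. unfold pairok in P. rewrite E in P. cbn [implb] in P. apply andb_true_iff in P. destruct P as [P _].
  rewrite forallb_forall in P. apply eqb_prop. apply P. apply in_seq; lia. Qed.
Lemma pairok_box n k p q j : pairok n k p q = true -> j <= k -> isbox j = true -> relb n (boxr j) (fst p) (fst q) = true ->
  Hv (snd p) j = true -> Hv (snd q) (boxa j) = true.
Proof. intros P Hj B R Hp. unfold pairok in P. apply andb_true_iff in P. destruct P as [_ P].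
  rewrite forallb_forall in P. specialize (P j ltac:(apply in_seq; lia)). rewrite B, R, Hp in P. auto. Qed.
Lemma consistent_pair n k c i i' : consistent n k c = true -> i < length c -> i' < length c ->
  pairok n k (nth i c dpt) (nth i' c dpt) = true.
Proof. intros H Hi Hi'. unfold consistent in H. apply andb_true_iff in H. destruct H as [_ H].
  rewrite forallb_forall in H. specialize (H _ (nth_In _ dpt Hi)). rewrite forallb_forall in H. apply H. apply nth_In; auto. Qed.
Lemma consistent_prop n k c i : consistent n k c = true -> i < length c -> propok k (snd (nth i c dpt)) = true.
Proof. intros H Hi. unfold consistent in H. apply andb_true_iff in H. destruct H as [H _].
  rewrite forallb_forall in H. apply (H _ (nth_In _ dpt Hi)). Qed.

Lemma first_le_gen (f : nat -> list nat) a m i j :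
  In (i, j) (flat_map (fun i => map (fun j => (i, j)) (f i)) (seq a m)) ->
  fst (nth 0 (flat_map (fun i => map (fun j => (i, j)) (f i)) (seq a m)) (0,0)) <= i.
Proof.
  revert a; induction m; intros a H; simpl in *; [destruct H|].
  apply in_app_or in H. destruct (f a) as [|x l] eqn:E; simpl in *.
  - destruct H as [[]|H]. apply IHm; auto.
  - destruct H as [H|H].
    + destruct H as [H|H]. inversion H; lia. apply in_map_iff in H. destruct H as [y [H _]]. inversion H; lia.
    + apply in_flat_map in H. destruct H as [b [Hb Hm]]. apply in_map_iff in Hm. destruct Hm as [y [Hy _]]. inversion Hy; subst. apply in_seq in Hb. lia.
Qed.
Lemma first_le n k c i j : In (i, j) (obls n k c) -> fst (nth 0 (obls n k c) (0,0)) <= i.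
Proof. unfold obls. apply first_le_gen. Qed.

Lemma count_lt {A} (f f' : A -> bool) l : (forall x, In x l -> f' x = true -> f x = true) ->
  (exists x, In x l /\ f x = true /\ f' x = false) -> length (filter f' l) < length (filter f l).
Proof.
  induction l; intros H1 [x [Hx [A1 A2]]]; [destruct Hx|]. simpl.
  assert (Hle : forall l, (forall x, In x l -> f' x = true -> f x = true) -> length (filter f' l) <= length (filter f l)).
  { clear. induction l; intros H; simpl; auto. destruct (f' a) eqn:E1. rewrite (H a (or_introl eq_refl) E1). simpl.
    apply le_n_S, IHl; intros; apply H; simpl; auto. destruct (f a); simpl; [apply le_S|]; apply IHl; intros; apply H; simpl; auto. }
  destruct Hx as [<-|Hx].
  - rewrite A1, A2. simpl. apply le_n_S, Hle. intros; apply H1; simpl; auto.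
  - destruct (f' a) eqn:E1. rewrite (H1 a (or_introl eq_refl) E1). simpl. apply le_n_S, IHl; eauto.
    intros; apply H1; simpl; auto.
    destruct (f a); simpl; [apply le_S|]; apply IHl; eauto; intros; apply H1; simpl; auto.
Qed.

Lemma stab n k c0 t i t' : good n k c0 -> Inv n k c0 -> i < length (chain n k c0 t) -> t <= t' ->
  i < length (chain n k c0 t') /\
  rect_of n t' (fst (nth i (chain n k c0 t') dpt)) = rect_of n t (fst (nth i (chain n k c0 t) dpt)) /\
  snd (nth i (chain n k c0 t') dpt) = snd (nth i (chain n k c0 t) dpt).
Proof.
  intros Hg HI Hi Ht. induction Ht; auto. destruct IHHt as [A [B C]].
  destruct (chain_nth n k c0 m i Hg A) as [D E]. rewrite D. split; [lia|]. split; auto.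
  rewrite rect_of_scale; auto. destruct (chain_Inv n k c0 m Hg HI) as [_ W]. apply W, nth_In; auto.
Qed.

Lemma step_handles n k c0 t i j : good n k c0 -> unw n (chain n k c0 t) i j = true -> i < length (chain n k c0 t) -> j <= k ->
  exists i1 j1, i1 <= i /\ j1 <= k /\ i1 < length (chain n k c0 t) /\ unw n (chain n k c0 t) i1 j1 = true /\
    witnessed n (chain n k c0 (S t)) (nth i1 (chain n k c0 (S t)) dpt) j1 = true.
Proof.
  intros Hg Hu Hi Hj. set (c := chain n k c0 t) in *.
  assert (Ho : In (i, j) (obls n k (scale c))) by (apply obls_in; rewrite length_scale, unw_scale; auto).
  pose proof (chain_ext n k c0 t Hg) as He. fold c in He. apply ext_cases in He.
  destruct He as [[E _]|[E [np [Ec [_ [R [Hf _]]]]]]].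
  { destruct (obls n k (scale c)); simpl in *; [destruct Ho|discriminate]. }
  destruct (nth 0 (obls n k (scale c)) (0,0)) as [i1 j1] eqn:Eo. simpl in R, Hf.
  assert (Ho1 : In (i1, j1) (obls n k (scale c))) by (rewrite <- Eo; apply nth_In; lia).
  pose proof (first_le n k _ _ _ Ho) as Hle. rewrite Eo in Hle. simpl in Hle.
  apply obls_in in Ho1. rewrite length_scale, unw_scale in Ho1. destruct Ho1 as [A [B C]].
  exists i1, j1. repeat split; auto. rewrite Ec. unfold witnessed. apply existsb_exists. exists np. split.
  apply in_or_app; right; left; auto. rewrite app_nth1 by (rewrite length_scale; auto). rewrite R, Hf. auto.
Qed.

Lemma unw_mono n k c0 t p j : good n k c0 -> p < length (chain n k c0 t) ->
  unw n (chain n k c0 (S t)) p j = true -> unw n (chain n k c0 t) p j = true.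
Proof.
  intros Hg Hp. destruct (chain_prefix n k c0 t Hg) as [ex E]. rewrite E. unfold unw.
  rewrite app_nth1 by (rewrite length_scale; auto). rewrite nth_scale. unfold witnessed at 1. rewrite existsb_app.
  intros H. apply andb_true_iff in H as [H1 H2]. apply negb_true_iff, orb_false_iff in H2 as [H2 _].
  rewrite andb_true_iff; split; auto. apply negb_true_iff. rewrite <- witnessed_scale. exact H2.
Qed.

Lemma fairness n k c0 t i j : good n k c0 -> Inv n k c0 -> i < length (chain n k c0 t) -> j <= k -> isbox j = true ->
  Hv (snd (nth i (chain n k c0 t) dpt)) j = false ->
  exists t', t <= t' /\ witnessed n (chain n k c0 t') (nth i (chain n k c0 t') dpt) j = true.
Proof.
  intros Hg HI Hi Hj B Hf. apply NNPP. intros Hn.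
  assert (U : forall t', t <= t' -> unw n (chain n k c0 t') i j = true).
  { intros t' Ht. destruct (stab n k c0 t i t' Hg HI Hi Ht) as [_ [_ S']]. unfold unw. rewrite B, S', Hf. simpl.
    destruct (witnessed _ _ _ _) eqn:X; auto. exfalso; apply Hn; eauto. }
  set (D := list_prod (seq 0 (S i)) (seq 0 (S k))).
  set (meas := fun t' => length (filter (fun pr => unw n (chain n k c0 t') (fst pr) (snd pr)) D)).
  assert (Dec : forall t', t <= t' -> meas (S t') < meas t').
  { intros t' Ht. destruct (stab n k c0 t i t' Hg HI Hi Ht) as [Hi' _].
    apply count_lt.
    - intros [p j'] Hpr H. apply in_prod_iff in Hpr. destruct Hpr as [P1 _]. apply in_seq in P1.
      simpl in *. apply (unw_mono n k c0 t' p j' Hg); auto. lia.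
    - destruct (step_handles n k c0 t' i j Hg (U t' Ht) Hi' Hj) as [i1 [j1 [A [B' [C [E F]]]]]].
      exists (i1, j1). split. apply in_prod; apply in_seq; lia. split; auto. simpl.
      change (unw n (chain n k c0 (S t')) i1 j1 = false). unfold unw. rewrite F. rewrite andb_false_r. auto. }
  assert (forall m, meas (t + m) + m <= meas t).
  { induction m. rewrite !Nat.add_0_r; lia. specialize (Dec (t + m) ltac:(lia)). replace (t + S m) with (S (t + m)) by lia. lia. }
  specialize (H (S (meas t))). lia.
Qed.

Notation pa n k c0 t i := (nth i (chain n k c0 t) dpt).
Definition rr n k c0 t i : rect n := rect_of n t (fst (pa n k c0 t i)).
Definition Wm n k c0 (w : rect n) := exists t i, i < length (chain n k c0 t) /\ w = rr n k c0 t i.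
Definition Vm n k c0 x (w : rect n) := exists t i, i < length (chain n k c0 t) /\ w = rr n k c0 t i /\
  Hv (snd (pa n k c0 t i)) (cpair 0 x) = true.

Lemma common n k c0 t i t' : good n k c0 -> Inv n k c0 -> i < length (chain n k c0 t) -> t <= t' ->
  i < length (chain n k c0 t') /\ rr n k c0 t' i = rr n k c0 t i /\ snd (pa n k c0 t' i) = snd (pa n k c0 t i).
Proof. intros. apply stab; auto. Qed.
Lemma stage_agree n k c0 T i i' : good n k c0 -> Inv n k c0 -> i < length (chain n k c0 T) -> i' < length (chain n k c0 T) ->
  Agree (fst (pa n k c0 T i)) (fst (pa n k c0 T i')) (rr n k c0 T i) (rr n k c0 T i').
Proof. intros Hg HI H1 H2. destruct (chain_Inv n k c0 T Hg HI) as [_ W]. apply agree_rect_of; apply W, nth_In; auto. Qed.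

Lemma truth n k c0 phi : good n k c0 -> Inv n k c0 -> code phi <= k -> forall t i, i < length (chain n k c0 t) ->
  (sat (Wm n k c0) (Vm n k c0) (rr n k c0 t i) phi <-> Hv (snd (pa n k c0 t i)) (code phi) = true).
Proof.
  intros Hg HI. assert (Cons : forall T, consistent n k (chain n k c0 T) = true) by (intros; apply chain_Inv; auto).
  induction phi; intros Hk t i Hi; simpl sat.
  - split.
    + intros [t' [i' [Hi' [E Hv']]]]. set (T := Nat.max t t').
      destruct (common n k c0 t i T Hg HI Hi ltac:(lia)) as [A1 [A2 A3]].
      destruct (common n k c0 t' i' T Hg HI Hi' ltac:(lia)) as [B1 [B2 B3]].
      assert (Heq : eqrb n (fst (pa n k c0 T i)) (fst (pa n k c0 T i')) = true).
      { rewrite <- relb_EQ. apply (transfer _ _ _ _ _ (stage_agree n k c0 T i i' Hg HI A1 B1)).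
        rewrite A2, B2, <- E. unfold rcc8_rel, rcc8_sets. intros x; tauto. }
      pose proof (pairok_eq n k _ _ (code (Var n0)) (consistent_pair n k _ i i' (Cons T) A1 B1) Heq Hk) as P.
      rewrite <- A3. simpl code in *. rewrite P. rewrite B3. auto.
    + intros H. exists t, i. auto.
  - assert (L : code phi < code (Neg phi)) by apply code_neg. rewrite IHphi by lia.
    rewrite (propok_neg k _ (code (Neg phi)) (consistent_prop n k _ i (Cons t) Hi) Hk) by (simpl; apply tag_c).
    simpl code. rewrite pay_c. destruct (Hv _ (code phi)); simpl; split; auto; congruence.
  - pose proof (code_and1 phi1 phi2). pose proof (code_and2 phi1 phi2). rewrite IHphi1, IHphi2 by lia.
    rewrite (propok_and k _ (code (And phi1 phi2)) (consistent_prop n k _ i (Cons t) Hi) Hk) by (simpl; apply tag_c).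
    simpl code. rewrite pay_c, fstu_cpair, sndu_cpair, andb_true_iff. tauto.
  - set (j := code (Box r phi)).
    assert (Bj : isbox j = true) by (apply isbox_spec; unfold j, boxr; simpl; rewrite tag_c, pay_c, fstu_cpair; split; auto; apply rcc8_code_lt).
    assert (Rj : boxr j = rcc8_code r) by (unfold j, boxr; simpl; rewrite pay_c, fstu_cpair; auto).
    assert (Aj : boxa j = code phi) by (unfold j, boxa; simpl; rewrite pay_c, sndu_cpair; auto).
    assert (L : code phi < j) by apply code_box.
    split.
    + intros H. destruct (Hv (snd (pa n k c0 t i)) j) eqn:E; auto. exfalso.
      destruct (fairness n k c0 t i j Hg HI Hi Hk Bj E) as [t' [Ht' Hw]].
      unfold witnessed in Hw. apply existsb_exists in Hw. destruct Hw as [q [Hq Hq']].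
      apply andb_true_iff in Hq'. destruct Hq' as [Hr Hn]. apply negb_true_iff in Hn.
      destruct (In_nth _ _ dpt Hq) as [qi [Hqi <-]].
      destruct (common n k c0 t i t' Hg HI Hi Ht') as [A1 [A2 A3]].
      rewrite Rj in Hr. apply (transfer _ _ _ _ _ (stage_agree n k c0 t' i qi Hg HI A1 Hqi)) in Hr.
      rewrite A2 in Hr. assert (S1 := H _ ltac:(exists t', qi; auto) Hr).
      apply IHphi in S1; auto; [|lia]. rewrite Aj in Hn. congruence.
    + intros Hj w [t' [q [Hq ->]]] Hr. set (T := Nat.max t t').
      destruct (common n k c0 t i T Hg HI Hi ltac:(lia)) as [A1 [A2 A3]].
      destruct (common n k c0 t' q T Hg HI Hq ltac:(lia)) as [B1 [B2 B3]].
      rewrite <- A2, <- B2 in Hr. apply (transfer _ _ _ _ _ (stage_agree n k c0 T i q Hg HI A1 B1)) in Hr.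
      rewrite <- Rj in Hr.
      assert (Hv (snd (pa n k c0 T i)) j = true) by (rewrite A3; auto).
      pose proof (pairok_box n k _ _ j (consistent_pair n k _ i q (Cons T) A1 B1) Hk Bj Hr H) as P.
      rewrite Aj in P. rewrite <- B2. apply IHphi; auto. lia.
Qed.

Theorem completeness n phi : (forall d, Sd n (code phi) d <> []) ->
  exists (W : rect n -> Prop) V s, W s /\ ~ sat W V s phi.
Proof.
  intros H. set (k := code phi) in *. destruct (good_init n k H) as [c0 [Hc0 Hg]].
  unfold S0 in Hc0. apply filter_In in Hc0. destruct Hc0 as [Hc0 Hcons]. apply in_map_iff in Hc0.
  destruct Hc0 as [h [<- Hh]]. apply filter_In in Hh. destruct Hh as [_ Hh]. apply negb_true_iff in Hh.
  set (c0 := [(repeat (1,2) n, h)]) in *.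
  assert (HI : Inv n k c0).
  { split; auto. intros p [<-|[]] m Hm. simpl. unfold lo_, hi_.
    rewrite nth_indep with (d' := (1,2)) by (rewrite repeat_length; auto). rewrite nth_repeat. simpl; lia. }
  exists (Wm n k c0), (Vm n k c0), (rr n k c0 0 0). split.
  - exists 0, 0. split; [simpl; lia|auto].
  - rewrite truth; auto. simpl. fold k. rewrite Hh. discriminate.
Qed.

Theorem theorem6p2 : forall n : nat, (1 <= n)%nat -> re_form (LS_rect n).
Proof.
  intros n _. unfold re_form. apply (re_from_check _ (Rchk n)). apply comp1_Rchk.
  intros k. split.
  - intros [phi [<- HL]]. destruct (classic (exists d, Sd n (code phi) d = [])) as [[d Hd]|Hn].
    + exists d. unfold Rchk. rewrite (proj2 (wfb_spec _)) by eauto. rewrite Hd. reflexivity.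
    + exfalso. destruct (completeness n phi) as [W [V [s [Hs Hns]]]].
      { intros d E. apply Hn; eauto. }
      apply Hns. apply HL; eauto.
  - intros [d Hd]. unfold Rchk in Hd. destruct (wfb k && (length (Sd n k d) =? 0))%nat eqn:E; [|discriminate].
    apply andb_true_iff in E. destruct E as [E1 E2]. apply wfb_spec in E1. destruct E1 as [phi <-].
    apply Nat.eqb_eq, length_zero_iff_nil in E2.
    exists phi; split; auto. intros W _ V s Hs. apply NNPP; intros Hn. apply (soundness n phi W V s Hs Hn d E2).
Qed.
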